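(* Assume the standing assumptions (A1)–(A2) below. Let $\{\gamma^t\}_{t\ge 0}$ be a step-size sequence with $\gamma^t\ge 0$ for all $t$, $\sum_{t=0}^\infty \gamma^t=\infty$ and $\sum_{t=0}^\infty (\gamma^t)^2<\infty$. Let $\boldsymbol{\mu}^\star$ be an optimal solution of the dual problem (D) and let $M>\|\boldsymbol{\mu}^\star\|_1$. Consider the following iterative procedure, run by every node $i\in\{1,\dots,N\}$ of a connected undirected graph $\mathcal G=(\{1,\dots,N\},\mathcal E)$ with neighbor sets $\mathcal N_i$, starting from arbitrary initial vectors $\boldsymbol{\lambda}_{ij}^0\in\mathbb{R}^S$ for all $(i,j)\in\mathcal E$: at each iteration $t\ge 0$, (1) each node $i$ computes $\big((\mathbf{x}_i^{t+1},\rho_i^{t+1}),\boldsymbol{\mu}_i^{t+1}\big)$ as a primal-dual optimal solution pair of $$\min_{\mathbf{x}_i,\rho_i}\ f_i(\mathbf{x}_i)+M\rho_i\quad\text{s.t. }\rho_i\ge 0,\ \mathbf{x}_i\in X_i,\ \mathbf{g}_i(\mathbf{x}_i)+\sum_{j\in\mathcal N_i}\big(\boldsymbol{\lambda}_{ij}^t-\boldsymbol{\lambda}_{ji}^t\big)\preceq \rho_i\mathbf{1},$$ where $\boldsymbol{\mu}_i^{t+1}\in\mathbb{R}^S$ is the multiplier of the last (vector) inequality constraint; (2) each node $i$ updates, for all $j\in\mathcal N_i$, $\boldsymbol{\lambda}_{ij}^{t+1}=\boldsymbol{\lambda}_{ij}^t-\gamma^t\big(\boldsymbol{\mu}_i^{t+1}-\boldsymbol{\mu}_j^{t+1}\big)$.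 Then: (i) the sequence $\big\{\sum_{i=1}^N\big(f_i(\mathbf{x}_i^t)+M\rho_i^t\big)\big\}_{t\ge 1}$ converges to the optimal cost $f^\star$ of (P); (ii) every limit point of $\{(\mathbf{x}_1^t,\dots,\mathbf{x}_N^t)\}_{t\ge 1}$ is an optimal (in particular feasible) solution of (P).
   Context: Standing setting: $N,S$ are positive integers; for each $i\in\{1,\dots,N\}$, $n_i$ is a positive integer, $X_i\subseteq\mathbb{R}^{n_i}$, $f_i:\mathbb{R}^{n_i}\to\mathbb{R}$, and $\mathbf{g}_i:\mathbb{R}^{n_i}\to\mathbb{R}^S$ with components $\mathbf{g}_{is}$, $s=1,\dots,S$. Vector inequalities $\preceq,\prec,\succeq$ are componentwise; $\mathbf{0},\mathbf{1}\in\mathbb{R}^S$ are the all-zeros and all-ones vectors. (A1) Each $f_i$ is convex, each $X_i$ is nonempty, compact and convex, and each component $\mathbf{g}_{is}$ is convex. (A2) (Slater) There exist $\bar{\mathbf{x}}_i\in\mathrm{relint}(X_i)$, $i=1,\dots,N$, with $\sum_{i=1}^N\mathbf{g}_i(\bar{\mathbf{x}}_i)\prec\mathbf{0}$. Problem (P): $\min_{\mathbf{x}_1,\dots,\mathbf{x}_N}\sum_{i=1}^N f_i(\mathbf{x}_i)$ s.t. $\mathbf{x}_i\in X_i$ for all $i$, $\sum_{i=1}^N\mathbf{g}_i(\mathbf{x}_i)\preceq\mathbf{0}$; its optimal cost is $f^\star$. For $\boldsymbol{\mu}\succeq\mathbf 0$ let $q_i(\boldsymbol{\mu})=\min_{\mathbf{x}_i\in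 X_i}\big(f_i(\mathbf{x}_i)+\boldsymbol{\mu}^\top\mathbf{g}_i(\mathbf{x}_i)\big)$. Dual problem (D): $\max_{\boldsymbol{\mu}\in\mathbb{R}^S}\sum_{i=1}^N q_i(\boldsymbol{\mu})$ s.t. $\boldsymbol{\mu}\succeq\mathbf{0}$. The graph is undirected in the sense that $(i,j)\in\mathcal E$ iff $(j,i)\in\mathcal E$; $\mathcal N_i=\{j:(i,j)\in\mathcal E\}$. *)

(* Defs.v *)
From Stdlib Require Fin.
From Stdlib Require Import Reals Lra List.
From Stdlib Require Import Relations.Relation_Operators.
Open Scope R_scope.

Definition vec (n : nat) : Type := Fin.t n -> R.

Fixpoint fsum (n : nat) : (Fin.t n -> R) -> R :=
  match n return (Fin.t n -> R) -> R with
  | O => fun _ => 0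
  | S m => fun f => f Fin.F1 + fsum m (fun k => f (Fin.FS k))
  end.

Definition vzero (n : nat) : vec n := fun _ => 0.
Definition vconst (n : nat) (a : R) : vec n := fun _ => a.
Definition vadd {n : nat} (u v : vec n) : vec n := fun k => u k + v k.
Definition vsub {n : nat} (u v : vec n) : vec n := fun k => u k - v k.
Definition vscale {n : nat} (a : R) (u : vec n) : vec n := fun k => a * u k.
Definition dot {n : nat} (u v : vec n) : R := fsum n (fun k => u k * v k).
Definition norm2 {n : nat} (u : vec n) : R := sqrt (fsum n (fun k => (u k) ^ 2)).
Definition norm1 {n : nat} (u : vec n) : R := fsum n (fun k => Rabs (u k)).
Definition dist {n : nat} (u v : vec n) : R := norm2 (vsub u v).
Definition vle {n : nat} (u v : vec n) : Prop := forall k, u k <= v k.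
Definition vlt {n : nat} (u v : vec n) : Prop := forall k, u k < v k.

Definition is_open {n : nat} (U : vec n -> Prop) : Prop :=
  forall x, U x -> exists eps, 0 < eps /\ forall y, dist y x < eps -> U y.

Definition is_compact {n : nat} (X : vec n -> Prop) : Prop :=
  forall (I : Type) (U : I -> vec n -> Prop),
    (forall i, is_open (U i)) ->
    (forall x, X x -> exists i, U i x) ->
    exists l : list I, forall x, X x -> exists i, In i l /\ U i x.

Definition convex_set {n : nat} (X : vec n -> Prop) : Prop :=
  forall x y theta, X x -> X y -> 0 <= theta <= 1 ->
    X (vadd (vscale theta x) (vscale (1 - theta) y)).

Definition convex_fun {n : nat} (f : vec n -> R) : Prop :=
  forall x y theta, 0 <= theta <= 1 ->
    f (vadd (vscale theta x) (vscale (1 - theta) y)) <= theta * f x + (1 - theta) * f y.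

Definition affine_hull {n : nat} (X : vec n -> Prop) (y : vec n) : Prop :=
  exists l : list (R * vec n),
    (forall p, In p l -> X (snd p)) /\
    fold_right (fun p acc => fst p + acc) 0 l = 1 /\
    forall k, y k = fold_right (fun p acc => fst p * snd p k + acc) 0 l.

Definition relint {n : nat} (X : vec n -> Prop) (x : vec n) : Prop :=
  X x /\ exists eps, 0 < eps /\ forall y, affine_hull X y -> dist y x < eps -> X y.

Definition is_inf (A : R -> Prop) (v : R) : Prop :=
  (forall c, A c -> v <= c) /\ (forall b, (forall c, A c -> b <= c) -> b <= v).

Section P.
Context {N Sd : nat} {n : Fin.t N -> nat}.

Definition P_feasible (X : forall i, vec (n i) -> Prop) (g : forall i, vec (n i) -> vec Sd)
  (x : forall i, vec (n i)) : Prop :=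
  (forall i, X i (x i)) /\ forall s, fsum N (fun i => g i (x i) s) <= 0.

Definition P_cost (f : forall i, vec (n i) -> R) (x : forall i, vec (n i)) : R :=
  fsum N (fun i => f i (x i)).

Definition P_optimal X f g (x : forall i, vec (n i)) : Prop :=
  P_feasible X g x /\ forall y, P_feasible X g y -> P_cost f x <= P_cost f y.

Definition P_optval X f g (v : R) : Prop :=
  is_inf (fun c => exists y, P_feasible X g y /\ c = P_cost f y) v.

Definition q_val (X : forall i, vec (n i) -> Prop) (f : forall i, vec (n i) -> R)
  (g : forall i, vec (n i) -> vec Sd) (i : Fin.t N) (mu : vec Sd) (v : R) : Prop :=
  is_inf (fun c => exists z, X i z /\ c = f i z + dot mu (g i z)) v.

Definition D_optimal X f g (mu : vec Sd) : Prop :=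
  vle (vzero Sd) mu /\
  forall mu', vle (vzero Sd) mu' ->
  forall qv qv' : Fin.t N -> R,
    (forall i, q_val X f g i mu (qv i)) ->
    (forall i, q_val X f g i mu' (qv' i)) ->
    fsum N qv' <= fsum N qv.

Definition dist_prod (x y : forall i, vec (n i)) : R :=
  fsum N (fun i => dist (x i) (y i)).

Definition limit_point (seq : nat -> forall i, vec (n i)) (xb : forall i, vec (n i)) : Prop :=
  forall eps (T : nat), 0 < eps -> exists t, (T <= t)%nat /\ dist_prod (seq t) xb < eps.
End P.

(* ---------- Local problem of node i ----------
   min_{x,rho} f(x) + M rho  s.t. rho >= 0, x in X, g(x) + c <= rho 1,
   where c = sum_{j in N_i} (lambda_ij - lambda_ji). *)
Section Local.
Context {m Sd : nat}.
Variables (X : vec m -> Prop) (f : vec m -> R) (g : vec m -> vec Sd) (M : R) (c : vec Sd).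

Definition loc_feas (x : vec m) (rho : R) : Prop :=
  0 <= rho /\ X x /\ vle (vadd (g x) c) (vconst Sd rho).

Definition loc_primal_opt (x : vec m) (rho : R) : Prop :=
  loc_feas x rho /\ forall y r, loc_feas y r -> f x + M * rho <= f y + M * r.

Definition loc_lagr (mu : vec Sd) (x : vec m) (rho : R) : R :=
  f x + M * rho + dot mu (vsub (vadd (g x) c) (vconst Sd rho)).

(* mu is an optimal solution of the dual problem
   max_{mu >= 0} inf_{x in X, rho >= 0} loc_lagr mu x rho.
   (q(mu') <= q(mu) is written as: every lower bound of L(.,mu') on the
   domain is a lower bound of L(.,mu); this handles the value -infinity.) *)
Definition loc_dual_opt (mu : vec Sd) : Prop :=
  vle (vzero Sd) mu /\
  forall mu', vle (vzero Sd) mu' ->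
  forall b, (forall y r, X y -> 0 <= r -> b <= loc_lagr mu' y r) ->
            (forall y r, X y -> 0 <= r -> b <= loc_lagr mu y r).

Definition loc_pd_opt (x : vec m) (rho : R) (mu : vec Sd) : Prop :=
  loc_primal_opt x rho /\ loc_dual_opt mu.
End Local.

Definition connected {N : nat} (E : Fin.t N -> Fin.t N -> bool) : Prop :=
  forall i j, clos_refl_trans (Fin.t N) (fun a b => E a b = true) i j.

Definition nbsum {N Sd : nat} (E : Fin.t N -> Fin.t N -> bool)
  (lam : Fin.t N -> Fin.t N -> vec Sd) (i : Fin.t N) : vec Sd :=
  fun s => fsum N (fun j => if E i j then lam i j s - lam j i s else 0).

(* Main.v *)
Require Import Defs.
From Stdlib Require Import Reals Lra Lia ZArith List Wf_nat Arith.
From Stdlib Require Fin.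
From Stdlib Require Import Classical ClassicalEpsilon FunctionalExtensionality.
Open Scope R_scope.

Lemma fsum_ext n (f g : Fin.t n -> R) : (forall k, f k = g k) -> fsum n f = fsum n g.
Proof. induction n; simpl; intros H; [reflexivity|]. rewrite H, (IHn (fun k => f (Fin.FS k)) (fun k => g (Fin.FS k))); auto. Qed.

Lemma fsum_plus n (f g : Fin.t n -> R) : fsum n (fun k => f k + g k) = fsum n f + fsum n g.
Proof. induction n; simpl; [lra|]. rewrite (IHn (fun k => f (Fin.FS k)) (fun k => g (Fin.FS k))). lra. Qed.

Lemma fsum_scal n (f : Fin.t n -> R) c : fsum n (fun k => c * f k) = c * fsum n f.
Proof. induction n; simpl; [lra|]. rewrite (IHn (fun k => f (Fin.FS k))). lra. Qed.

Lemma fsum_const n c : fsum n (fun _ => c) = INR n * c.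
Proof. induction n; simpl fsum; [simpl; lra|]. rewrite IHn, S_INR. lra. Qed.

Lemma fsum_zero n : fsum n (fun _ => 0) = 0.
Proof. rewrite fsum_const. lra. Qed.

Lemma fsum_opp n (f : Fin.t n -> R) : fsum n (fun k => - f k) = - fsum n f.
Proof. induction n; simpl; [lra|]. rewrite (IHn (fun k => f (Fin.FS k))). lra. Qed.

Lemma fsum_minus n (f g : Fin.t n -> R) : fsum n (fun k => f k - g k) = fsum n f - fsum n g.
Proof. induction n; simpl; [lra|]. rewrite (IHn (fun k => f (Fin.FS k)) (fun k => g (Fin.FS k))). lra. Qed.

Lemma fsum_le n (f g : Fin.t n -> R) : (forall k, f k <= g k) -> fsum n f <= fsum n g.
Proof. induction n; simpl; intros H; [lra|]. pose proof (H Fin.F1). pose proof (IHn (fun k => f (Fin.FS k)) (fun k => g (Fin.FS k)) (fun k => H (Fin.FS k))). lra. Qed.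

Lemma fsum_nonneg n (f : Fin.t n -> R) : (forall k, 0 <= f k) -> 0 <= fsum n f.
Proof. intros H. rewrite <- (fsum_zero n). apply fsum_le; auto. Qed.

Lemma fsum_ge_term n (f : Fin.t n -> R) k : (forall k, 0 <= f k) -> f k <= fsum n f.
Proof.
  induction n; intros H; [inversion k|].
  simpl. apply (Fin.caseS' k).
  - pose proof (fsum_nonneg n (fun k => f (Fin.FS k)) (fun k => H (Fin.FS k))). lra.
  - intros p. pose proof (IHn (fun k => f (Fin.FS k)) p (fun k => H (Fin.FS k))). pose proof (H Fin.F1). simpl in *. lra.
Qed.

Lemma fsum_eq0 n (f : Fin.t n -> R) : (forall k, 0 <= f k) -> fsum n f = 0 -> forall k, f k = 0.
Proof. intros H H0 k. pose proof (fsum_ge_term n f k H). pose proof (H k). lra. Qed.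

Lemma fsum_swap n m (F : Fin.t n -> Fin.t m -> R) :
  fsum n (fun i => fsum m (fun j => F i j)) = fsum m (fun j => fsum n (fun i => F i j)).
Proof.
  induction n; simpl.
  - rewrite fsum_zero. reflexivity.
  - rewrite (IHn (fun i j => F (Fin.FS i) j)). rewrite <- fsum_plus. reflexivity.
Qed.

Lemma fsum_abs n (f : Fin.t n -> R) : Rabs (fsum n f) <= fsum n (fun k => Rabs (f k)).
Proof. induction n; simpl. rewrite Rabs_R0; lra.
  pose proof (IHn (fun k => f (Fin.FS k))). pose proof (Rabs_triang (f Fin.F1) (fsum n (fun k => f (Fin.FS k)))). lra. Qed.

Lemma fsum_bound n (f : Fin.t n -> R) c : (forall k, Rabs (f k) <= c) -> Rabs (fsum n f) <= INR n * c.
Proof. intros H. eapply Rle_trans; [apply fsum_abs|]. rewrite <- fsum_const. apply fsum_le; auto. Qed.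

Lemma fsum_delta n (j : Fin.t n) c :
  fsum n (fun k => if Fin.eq_dec k j then c else 0) = c.
Proof.
  induction n; [inversion j|]. simpl. apply (Fin.caseS' j).
  - destruct (Fin.eq_dec Fin.F1 Fin.F1) as [_|e]; [|congruence].
    rewrite (fsum_ext n _ (fun _ => 0)); [rewrite fsum_zero; lra|].
    intros k. destruct (Fin.eq_dec (Fin.FS k) Fin.F1); [discriminate|auto].
  - intros p. destruct (Fin.eq_dec Fin.F1 (Fin.FS p)); [discriminate|].
    rewrite Rplus_0_l. rewrite <- (IHn p) at 1. apply fsum_ext. intros k.
    destruct (Fin.eq_dec (Fin.FS k) (Fin.FS p)) as [e|e]; destruct (Fin.eq_dec k p) as [e'|e']; auto.
    + apply Fin.FS_inj in e. contradiction.
    + subst. contradiction.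
Qed.

Fixpoint fin_enum (n : nat) : list (Fin.t n) :=
  match n with O => nil | S m => Fin.F1 :: map Fin.FS (fin_enum m) end.
Lemma fin_enum_all n (i : Fin.t n) : In i (fin_enum n).
Proof. induction i; simpl; auto. right. apply in_map. auto. Qed.

Lemma vec_ext {n} (u v : vec n) : (forall k, u k = v k) -> u = v.
Proof. intros; apply functional_extensionality; auto. Qed.

Lemma dot_plus_r {n} (u v w : vec n) : dot u (vadd v w) = dot u v + dot u w.
Proof. unfold dot, vadd. rewrite <- fsum_plus. apply fsum_ext. intros; ring. Qed.
Lemma dot_sub_r {n} (u v w : vec n) : dot u (vsub v w) = dot u v - dot u w.
Proof. unfold dot, vsub. rewrite <- fsum_minus. apply fsum_ext. intros; ring. Qed.
Lemma dot_const_r {n} (u : vec n) c : dot u (vconst n c) = c * fsum n u.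
Proof. unfold dot, vconst. rewrite <- fsum_scal. apply fsum_ext. intros; ring. Qed.
Lemma dot_le_r {n} (u v w : vec n) : vle (vzero n) u -> vle v w -> dot u v <= dot u w.
Proof. intros H1 H2. unfold dot. apply fsum_le. intros k. apply Rmult_le_compat_l; auto. apply H1. Qed.

Lemma coord_le_norm2 {n} (v : vec n) k : Rabs (v k) <= norm2 v.
Proof.
  unfold norm2. rewrite <- sqrt_Rsqr_abs. apply sqrt_le_1_alt.
  unfold Rsqr. replace (v k * v k) with ((fun j => v j ^ 2) k) by (simpl; ring).
  apply (fsum_ge_term n (fun j => v j ^ 2)). intros; apply pow2_ge_0.
Qed.

Lemma norm1_nonneg {n} (v : vec n) : 0 <= norm1 v.
Proof. apply fsum_nonneg. intros; apply Rabs_pos. Qed.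

Lemma norm1_le_norm2 {n} (v : vec n) : norm1 v <= INR n * norm2 v.
Proof. unfold norm1. rewrite <- fsum_const. apply fsum_le. intros; apply coord_le_norm2. Qed.

Lemma norm1_triang {n} (u v w : vec n) : norm1 (vsub u w) <= norm1 (vsub u v) + norm1 (vsub v w).
Proof. unfold norm1, vsub. rewrite <- fsum_plus. apply fsum_le. intros k.
  replace (u k - w k) with ((u k - v k) + (v k - w k)) by ring. apply Rabs_triang. Qed.

Lemma norm1_sym {n} (u v : vec n) : norm1 (vsub u v) = norm1 (vsub v u).
Proof. unfold norm1, vsub. apply fsum_ext. intros; apply Rabs_minus_sym. Qed.

Lemma norm1_zero {n} (u v : vec n) : norm1 (vsub u v) = 0 -> u = v.
Proof. intros H. apply vec_ext. intros k.
  pose proof (fsum_eq0 n _ (fun k => Rabs_pos _) H k). simpl in H0. unfold vsub in H0.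
  destruct (Req_dec (u k - v k) 0); [lra|]. apply Rabs_no_R0 in H1. contradiction. Qed.

Lemma norm1_coord {n} (v : vec n) k : Rabs (v k) <= norm1 v.
Proof. apply (fsum_ge_term n (fun k => Rabs (v k))). intros; apply Rabs_pos. Qed.

Lemma ball1_open {n} (c : vec n) r : is_open (fun y => norm1 (vsub y c) < r).
Proof.
  intros y Hy. exists ((r - norm1 (vsub y c)) / (INR n + 1)). split.
  - apply Rdiv_lt_0_compat; [lra|]. pose proof (pos_INR n); lra.
  - intros z Hz. pose proof (norm1_triang z y c). pose proof (norm1_le_norm2 (vsub z y)).
    unfold dist in Hz. pose proof (pos_INR n).
    assert (INR n * norm2 (vsub z y) <= INR n * ((r - norm1 (vsub y c)) / (INR n + 1))).
    { apply Rmult_le_compat_l. lra. unfold dist in Hz. apply Rlt_le. exact Hz. }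
    assert (INR n * ((r - norm1 (vsub y c)) / (INR n + 1)) < r - norm1 (vsub y c)).
    { set (a := r - norm1 (vsub y c)). assert (0 < a) by (unfold a; lra).
      apply (Rmult_lt_reg_r (INR n + 1)); [lra|]. replace (INR n * (a / (INR n + 1)) * (INR n + 1)) with (INR n * a) by (field; lra). nra. }
    lra.
Qed.

Definition vcons {m} (a : R) (v : vec m) : vec (S m) :=
  fun k => Fin.caseS' k (fun _ => R) a v.

Lemma vcons_eta {m} (y : vec (S m)) : y = vcons (y Fin.F1) (fun k => y (Fin.FS k)).
Proof. apply vec_ext. intros k. apply (Fin.caseS' k); reflexivity. Qed.

Lemma cvx_comb_eq {n} (u v w : vec n) th :
  (forall k, th * u k + (1 - th) * v k = w k) -> vadd (vscale th u) (vscale (1 - th) v) = w.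
Proof. intros H; apply vec_ext; intros k; unfold vadd, vscale; auto. Qed.

Lemma conv_ub n (f : vec n -> R) : convex_fun f -> forall x, exists C, forall y, norm1 (vsub y x) <= 1 -> f y <= C.
Proof.
  revert f; induction n; intros f Hf x.
  - exists (f x). intros y _. replace y with x; [lra|]. apply vec_ext; intros k; inversion k.
  - set (x0 := x Fin.F1). set (x' := fun k => x (Fin.FS k)).
    set (f' := fun v : vec n => f (vcons x0 v)).
    assert (Hf' : convex_fun f').
    { intros u v th Hth. unfold f'.
      replace (vcons x0 (vadd (vscale th u) (vscale (1 - th) v))) with
        (vadd (vscale th (vcons x0 u)) (vscale (1 - th) (vcons x0 v))).
      { apply Hf; auto. }
      apply vec_ext; intros k; apply (Fin.caseS' k); unfold vadd, vscale; simpl; intros; ring. }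
    destruct (IHn f' Hf' x') as [C1 HC1].
    set (qp := vcons (x0 + 1) x'). set (qm := vcons (x0 - 1) x').
    exists (Rmax C1 (Rmax (f qp) (f qm))).
    intros y Hy. rewrite (vcons_eta y) in *. set (y0 := y Fin.F1) in *. set (y' := fun k => y (Fin.FS k)) in *.
    assert (Hn : norm1 (vsub (vcons y0 y') x) = Rabs (y0 - x0) + norm1 (vsub y' x')) by reflexivity.
    rewrite Hn in Hy. clearbody y0 y'.
    set (a := Rabs (y0 - x0)) in *. set (b := norm1 (vsub y' x')) in *.
    assert (Hb : 0 <= b) by apply norm1_nonneg. assert (Ha : 0 <= a) by apply Rabs_pos.
    set (sg := if Rle_dec x0 y0 then 1 else -1).
    assert (Hsg : a * sg = y0 - x0).
    { unfold a, sg. destruct (Rle_dec x0 y0).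
      - rewrite Rabs_right by lra. ring.
      - rewrite Rabs_left by lra. ring. }
    set (q := vcons (x0 + sg) x').
    assert (Hq : f q <= Rmax (f qp) (f qm)).
    { unfold q, sg. destruct (Rle_dec x0 y0); [apply Rmax_l|].
      replace (x0 + -1) with (x0 - 1) by ring. apply Rmax_r. }
    destruct (Rlt_dec a 1) as [Ha1|Ha1].
    + set (p' := fun k => x' k + (y' k - x' k) / (1 - a)).
      assert (Hp' : norm1 (vsub p' x') <= 1).
      { unfold norm1, vsub, p'.
        rewrite (fsum_ext _ _ (fun k => / (1 - a) * Rabs (y' k - x' k))).
        - rewrite fsum_scal.
          apply (Rmult_le_reg_l (1 - a)); [lra|]. rewrite <- Rmult_assoc, Rinv_r by lra. change (fsum n (fun k => Rabs (y' k - x' k))) with b. lra.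
        - intros k. replace (x' k + (y' k - x' k) / (1 - a) - x' k) with (/ (1 - a) * (y' k - x' k)) by (field; lra).
          rewrite Rabs_mult, Rabs_right; [reflexivity|]. apply Rle_ge, Rlt_le, Rinv_0_lt_compat; lra. }
      pose proof (HC1 p' Hp') as Hfp. unfold f' in Hfp.
      replace (vcons y0 y') with (vadd (vscale (1 - a) (vcons x0 p')) (vscale (1 - (1 - a)) q)).
      * eapply Rle_trans; [apply Hf; lra|].
        pose proof (Rmax_l C1 (Rmax (f qp) (f qm))). pose proof (Rmax_r C1 (Rmax (f qp) (f qm))).
        set (MM := Rmax C1 (Rmax (f qp) (f qm))) in *.
        assert ((1 - a) * f (vcons x0 p') <= (1 - a) * MM) by (apply Rmult_le_compat_l; lra).
        assert ((1 - (1 - a)) * f q <= (1 - (1 - a)) * MM) by (apply Rmult_le_compat_l; lra).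
        lra.
      * apply vec_ext; intros k; apply (Fin.caseS' k); unfold vadd, vscale, q, p'; simpl.
        { assert (y0 = x0 + a * sg) by lra. rewrite H. ring. }
        intros j. field. lra.
    + assert (a = 1) by lra. assert (b = 0) by lra.
      assert (y' = x') by (apply norm1_zero; auto).
      replace (vcons y0 y') with q.
      * eapply Rle_trans; [exact Hq|apply Rmax_r].
      * apply vec_ext; intros k; apply (Fin.caseS' k); unfold q; simpl.
        { rewrite H in Hsg. lra. } intros; subst; auto.
Qed.

Lemma conv_lsc n (f : vec n -> R) : convex_fun f -> forall x eta, 0 < eta ->
  exists del, 0 < del /\ forall y, norm1 (vsub y x) < del -> f x - eta < f y.
Proof.
  intros Hf x eta Heta. destruct (conv_ub n f Hf x) as [C HC].
  assert (HCx : f x <= C). { apply HC. unfold norm1, vsub. rewrite (fsum_ext _ _ (fun _ => 0)).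
    rewrite fsum_zero; lra. intros; rewrite Rminus_diag, Rabs_R0; auto. }
  exists (Rmin 1 (eta / (C - f x + 1))). split.
  { apply Rmin_glb_lt; [lra|]. apply Rdiv_lt_0_compat; lra. }
  intros y Hy. set (s := norm1 (vsub y x)) in *.
  assert (Hs1 : s < 1) by (eapply Rlt_le_trans; [exact Hy|apply Rmin_l]).
  assert (Hs2 : s < eta / (C - f x + 1)) by (eapply Rlt_le_trans; [exact Hy|apply Rmin_r]).
  assert (Hs0 : 0 <= s) by apply norm1_nonneg.
  destruct (Req_dec s 0) as [E0|E0].
  { assert (y = x) by (apply norm1_zero; auto). subst. lra. }
  set (z := fun k => x k - (y k - x k) / s).
  assert (Hz : norm1 (vsub z x) <= 1).
  { unfold norm1, vsub, z. rewrite (fsum_ext _ _ (fun k => / s * Rabs (y k - x k))).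
    - rewrite fsum_scal. change (fsum n (fun k => Rabs (y k - x k))) with s. rewrite Rinv_l; lra.
    - intros k. replace (x k - (y k - x k) / s - x k) with (- (/ s * (y k - x k))) by (field; lra).
      rewrite Rabs_Ropp, Rabs_mult, Rabs_right; [reflexivity|]. apply Rle_ge, Rlt_le, Rinv_0_lt_compat; lra. }
  pose proof (HC z Hz) as Hfz.
  assert (Hx : x = vadd (vscale (/ (1 + s)) y) (vscale (1 - / (1 + s)) z)).
  { symmetry; apply cvx_comb_eq. intros k; unfold z. field. lra. }
  assert (Hcv : f x <= / (1 + s) * f y + (1 - / (1 + s)) * f z).
  { rewrite Hx at 1. apply Hf. split. left; apply Rinv_0_lt_compat; lra.
    rewrite <- Rinv_1. apply Rinv_le_contravar; lra. }
  assert (Hm : (1 + s) * f x <= f y + s * C).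
  { replace (1 - / (1 + s)) with (s / (1 + s)) in Hcv by (field; lra).
    apply (Rmult_le_compat_l (1 + s)) in Hcv; [|lra].
    replace ((1 + s) * (/ (1 + s) * f y + s / (1 + s) * f z)) with (f y + s * f z) in Hcv by (field; lra).
    assert (s * f z <= s * C) by (apply Rmult_le_compat_l; lra). lra. }
  assert (s * (C - f x + 1) < eta).
  { apply (Rmult_lt_compat_r (C - f x + 1)) in Hs2; [|lra].
    unfold Rdiv in Hs2. rewrite Rmult_assoc, Rinv_l in Hs2 by lra. lra. }
  nra.
Qed.

Lemma fold_max_in {A} (t : A -> R) l c : In c l -> t c <= fold_right (fun c acc => Rmax (t c) acc) 0 l.
Proof. induction l; simpl; intros H; [contradiction|]. destruct H; subst.
  apply Rmax_l. eapply Rle_trans; [apply IHl; auto|apply Rmax_r]. Qed.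

Lemma fold_maxn_in {A} (t : A -> nat) l c : In c l -> (t c <= fold_right (fun c acc => max (t c) acc) 0 l)%nat.
Proof. induction l; simpl; intros H; [contradiction|]. destruct H; subst.
  apply Nat.le_max_l. eapply Nat.le_trans; [apply IHl; auto|apply Nat.le_max_r]. Qed.

Lemma conv_bounded n (X : vec n -> Prop) (f : vec n -> R) : is_compact X -> convex_fun f ->
  exists B, forall y, X y -> Rabs (f y) <= B.
Proof.
  intros HX Hf.
  set (Cf := fun c => proj1_sig (constructive_indefinite_description _ (conv_ub n f Hf c))).
  assert (HCf : forall c y, norm1 (vsub y c) <= 1 -> f y <= Cf c).
  { intros c. unfold Cf. destruct (constructive_indefinite_description _ _); simpl; auto. }
  destruct (HX (vec n) (fun c y => norm1 (vsub y c) < 1)) as [l Hl].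
  - intros c; apply ball1_open.
  - intros x _. exists x. unfold norm1, vsub. rewrite (fsum_ext _ _ (fun _ => 0)).
    rewrite fsum_zero; lra. intros; rewrite Rminus_diag, Rabs_R0; auto.
  - exists (fold_right (fun c acc => Rmax (2 * Rabs (Cf c) + 2 * Rabs (f c)) acc) 0 l).
    intros y Hy. destruct (Hl y Hy) as [c [Hc Hyc]].
    pose proof (fold_max_in (fun c => 2 * Rabs (Cf c) + 2 * Rabs (f c)) l c Hc) as Hb. simpl in Hb.
    set (w := fun k => 2 * c k - y k).
    assert (Hw : norm1 (vsub w c) <= 1).
    { rewrite norm1_sym. replace (norm1 (vsub c w)) with (norm1 (vsub y c)); [lra|].
      unfold norm1, vsub, w. apply fsum_ext. intros k. f_equal. ring. }
    assert (Hc2 : c = vadd (vscale (1/2) y) (vscale (1 - 1/2) w)).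
    { symmetry. apply cvx_comb_eq. intros; unfold w; field. }
    assert (f c <= 1/2 * f y + (1 - 1/2) * f w) by (rewrite Hc2 at 1; apply Hf; lra).
    pose proof (HCf c y (Rlt_le _ _ Hyc)). pose proof (HCf c w Hw).
    pose proof (Rle_abs (Cf c)). pose proof (Rle_abs (f c)). pose proof (Rle_abs (- Cf c)). pose proof (Rle_abs (- f c)).
    rewrite Rabs_Ropp in *.
    apply Rabs_le. lra.
Qed.

Lemma inv_small e : 0 < e -> exists T, forall k, (T <= k)%nat -> / (INR k + 1) < e.
Proof.
  intros He. destruct (archimed (/ e)) as [H1 _].
  assert (0 <= up (/ e))%Z. { apply le_IZR. pose proof (Rinv_0_lt_compat e He). lra. }
  exists (Z.to_nat (up (/ e))). intros k Hk.
  apply le_INR in Hk. rewrite INR_IZR_INZ, Z2Nat.id in Hk by auto.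
  rewrite <- (Rinv_inv e). apply Rinv_lt_contravar.
  - apply Rmult_lt_0_compat. apply Rinv_0_lt_compat; auto. pose proof (pos_INR k); lra.
  - lra.
Qed.

Definition incr (phi : nat -> nat) := forall k, (phi k < phi (S k))%nat.
Lemma incr_ge phi : incr phi -> forall k, (k <= phi k)%nat.
Proof. intros H k; induction k; [lia|]. specialize (H k). lia. Qed.
Lemma incr_mono phi : incr phi -> forall a b, (a <= b)%nat -> (phi a <= phi b)%nat.
Proof. intros H a b Hab; induction Hab; [lia|]. specialize (H m). lia. Qed.
Lemma incr_comp phi psi : incr phi -> incr psi -> incr (fun k => phi (psi k)).
Proof. intros H1 H2 k. pose proof (H2 k). pose proof (incr_mono phi H1 (S (psi k)) (psi (S k)) H). specialize (H1 (psi k)). lia. Qed.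

Lemma extract (P : nat -> nat -> Prop) : (forall m T, exists t, (T <= t)%nat /\ P m t) ->
  exists phi, incr phi /\ forall k, P k (phi k).
Proof.
  intros H.
  set (nx := fun m T => proj1_sig (constructive_indefinite_description _ (H m T))).
  assert (Hnx : forall m T, (T <= nx m T)%nat /\ P m (nx m T)).
  { intros m T; unfold nx; destruct (constructive_indefinite_description _ _); simpl; auto. }
  exists (fix phi k := match k with O => nx O O | S k' => nx (S k') (S (phi k')) end).
  split.
  - intros k. simpl. destruct (Hnx (S k) (S ((fix phi k := match k with O => nx O O | S k' => nx (S k') (S (phi k')) end) k))). lia.
  - intros [|k]; simpl; apply Hnx.
Qed.

Definition conv {n} (w : nat -> vec n) (p : vec n) :=
  forall e, 0 < e -> exists K, forall k, (K <= k)%nat -> norm1 (vsub (w k) p) < e.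

Lemma conv_sub {n} (w : nat -> vec n) p phi : conv w p -> incr phi -> conv (fun k => w (phi k)) p.
Proof. intros H Hp e He. destruct (H e He) as [K HK]. exists K. intros k Hk. apply HK.
  pose proof (incr_ge phi Hp k). lia. Qed.

Lemma cluster {n} (X : vec n -> Prop) (u : nat -> vec n) : is_compact X -> (forall k, X (u k)) ->
  exists p, X p /\ forall e T, 0 < e -> exists k, (T <= k)%nat /\ norm1 (vsub (u k) p) < e.
Proof.
  intros HX Hu. apply NNPP. intros Hn.
  assert (Hp : forall p : {p | X p}, exists eT : R * nat, 0 < fst eT /\
            forall k, (snd eT <= k)%nat -> fst eT <= norm1 (vsub (u k) (proj1_sig p))).
  { intros [p Hp0]. simpl. apply NNPP. intros H1. apply Hn. exists p. split; auto.
    intros e T He. apply NNPP. intros H2. apply H1. exists (e, T). simpl. split; auto.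
    intros k Hk. apply Rnot_lt_le. intros H3. apply H2. exists k; auto. }
  set (ET := fun p => proj1_sig (constructive_indefinite_description _ (Hp p))).
  assert (HET : forall p, 0 < fst (ET p) /\ forall k, (snd (ET p) <= k)%nat -> fst (ET p) <= norm1 (vsub (u k) (proj1_sig p))).
  { intros p; unfold ET; destruct (constructive_indefinite_description _ _); simpl; auto. }
  destruct (HX {p | X p} (fun p y => norm1 (vsub y (proj1_sig p)) < fst (ET p))) as [l Hl].
  - intros p; apply ball1_open.
  - intros x Hx. exists (exist _ x Hx). simpl. unfold norm1, vsub. rewrite (fsum_ext _ _ (fun _ => 0)).
    rewrite fsum_zero; apply HET. intros; rewrite Rminus_diag, Rabs_R0; auto.
  - set (Tm := fold_right (fun p acc => max (snd (ET p)) acc) 0%nat l).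
    destruct (Hl (u Tm) (Hu Tm)) as [p [Hpl Hpu]].
    pose proof (fold_maxn_in (fun p => snd (ET p)) l p Hpl).
    destruct (HET p) as [_ H2]. specialize (H2 Tm H). lra.
Qed.

Lemma cluster_conv {n} (X : vec n -> Prop) (u : nat -> vec n) : is_compact X -> (forall k, X (u k)) ->
  exists p phi, X p /\ incr phi /\ conv (fun k => u (phi k)) p.
Proof.
  intros HX Hu. destruct (cluster X u HX Hu) as [p [Hp Hc]].
  destruct (extract (fun m t => norm1 (vsub (u t) p) < / (INR m + 1))) as [phi [Hi Hphi]].
  { intros m T. apply Hc. apply Rinv_0_lt_compat. pose proof (pos_INR m); lra. }
  exists p, phi. split; auto. split; auto.
  intros e He. destruct (inv_small e He) as [T HT]. exists T. intros k Hk.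
  eapply Rlt_trans; [apply Hphi|]. apply HT; auto.
Qed.

Lemma compact_closed {n} (X : vec n -> Prop) p : is_compact X ->
  (forall e, 0 < e -> exists y, X y /\ norm1 (vsub y p) < e) -> X p.
Proof.
  intros HX H.
  assert (H' : forall k : nat, exists y, X y /\ norm1 (vsub y p) < / (INR k + 1)).
  { intros k; apply H. apply Rinv_0_lt_compat. pose proof (pos_INR k); lra. }
  set (u := fun k => proj1_sig (constructive_indefinite_description _ (H' k))).
  assert (Hu : forall k, X (u k) /\ norm1 (vsub (u k) p) < / (INR k + 1)).
  { intros k; unfold u; destruct (constructive_indefinite_description _ _); simpl; auto. }
  destruct (cluster X u HX (fun k => proj1 (Hu k))) as [c [Hc Hcl]].
  replace p with c; auto. apply norm1_zero.
  pose proof (norm1_nonneg (vsub c p)). apply Rle_antisym; auto. apply Rnot_lt_le. intros Hd.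
  set (d := norm1 (vsub c p)) in *.
  destruct (inv_small (d/2)) as [T HT]; [lra|].
  destruct (Hcl (d/2) T) as [k [Hk Hk2]]; [lra|].
  pose proof (norm1_triang c (u k) p). rewrite norm1_sym in Hk2.
  pose proof (proj2 (Hu k)). pose proof (HT k Hk). unfold d in *. lra.
Qed.

Lemma nested (N : nat) (n : Fin.t N -> nat) (X : forall i, vec (n i) -> Prop)
  (HX : forall i, is_compact (X i)) (u : nat -> forall i, vec (n i)) (Hu : forall k i, X i (u k i)) :
  forall L : list (Fin.t N), exists phi, incr phi /\
    forall i, In i L -> exists p, X i p /\ conv (fun k => u (phi k) i) p.
Proof.
  induction L as [|i0 L IH].
  - exists (fun k => k). split; [intros k; lia|]. intros i [].
  - destruct IH as [phi1 [Hi1 H1]].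
    destruct (cluster_conv (X i0) (fun k => u (phi1 k) i0) (HX i0) (fun k => Hu _ i0)) as [p0 [phi2 [Hp0 [Hi2 Hc2]]]].
    exists (fun k => phi1 (phi2 k)). split; [apply incr_comp; auto|].
    intros i [<-|Hi].
    + exists p0; split; auto.
    + destruct (H1 i Hi) as [p [Hp Hc]]. exists p; split; auto.
      apply (conv_sub (fun k => u (phi1 k) i) p phi2); auto.
Qed.

Lemma nested_all (N : nat) (n : Fin.t N -> nat) (X : forall i, vec (n i) -> Prop)
  (HX : forall i, is_compact (X i)) (u : nat -> forall i, vec (n i)) (Hu : forall k i, X i (u k i)) :
  exists phi (p : forall i, vec (n i)), incr phi /\ forall i, X i (p i) /\ conv (fun k => u (phi k) i) (p i).
Proof.
  destruct (nested N n X HX u Hu (fin_enum N)) as [phi [Hi H]].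
  assert (H' : forall i, exists p, X i p /\ conv (fun k => u (phi k) i) p) by (intros i; apply H, fin_enum_all).
  exists phi, (fun i => proj1_sig (constructive_indefinite_description _ (H' i))). split; auto.
  intros i. destruct (constructive_indefinite_description _ _); simpl; auto.
Qed.

Lemma unif_fin (N : nat) (P : Fin.t N -> nat -> Prop) :
  (forall i, exists K, forall k, (K <= k)%nat -> P i k) -> exists K, forall i k, (K <= k)%nat -> P i k.
Proof.
  intros H.
  assert (forall L : list (Fin.t N), exists K, forall i, In i L -> forall k, (K <= k)%nat -> P i k).
  { induction L as [|i0 L IH]. exists 0%nat. intros i [].
    destruct IH as [K1 HK1]. destruct (H i0) as [K0 HK0]. exists (max K0 K1).
    intros i [<-|Hi] k Hk. apply HK0; lia. apply HK1; auto; lia. }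
  destruct (H0 (fin_enum N)) as [K HK]. exists K. intros i k Hk. apply HK; auto. apply fin_enum_all.
Qed.

Lemma lsc_sum (N : nat) (n : Fin.t N -> nat) (h : forall i, vec (n i) -> R)
  (w : nat -> forall i, vec (n i)) (p : forall i, vec (n i)) :
  (forall i, convex_fun (h i)) -> (forall i, conv (fun k => w k i) (p i)) ->
  forall eta, 0 < eta -> exists K, forall k, (K <= k)%nat ->
    fsum N (fun i => h i (p i)) <= fsum N (fun i => h i (w k i)) + eta.
Proof.
  intros Hh Hc eta He.
  set (e := eta / (INR N + 1)). assert (He' : 0 < e) by (apply Rdiv_lt_0_compat; pose proof (pos_INR N); lra).
  destruct (unif_fin N (fun i k => h i (p i) - e < h i (w k i))) as [K HK].
  { intros i. destruct (conv_lsc _ (h i) (Hh i) (p i) e He') as [d [Hd Hd2]].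
    destruct (Hc i d Hd) as [K HK]. exists K. intros k Hk. apply Hd2. apply HK; auto. }
  exists K. intros k Hk.
  assert (fsum N (fun i => h i (p i)) <= fsum N (fun i => h i (w k i) + e)).
  { apply fsum_le. intros i. pose proof (HK i k Hk). lra. }
  rewrite fsum_plus, fsum_const in H.
  assert (INR N * e <= eta).
  { unfold e. apply (Rmult_le_reg_r (INR N + 1)); [pose proof (pos_INR N); lra|].
    replace (INR N * (eta / (INR N + 1)) * (INR N + 1)) with (INR N * eta) by (field; pose proof (pos_INR N); lra).
    pose proof (pos_INR N); nra. }
  lra.
Qed.

Lemma P_opt_exists (N Sd : nat) (n : Fin.t N -> nat) (X : forall i, vec (n i) -> Prop)
  (f : forall i, vec (n i) -> R) (g : forall i, vec (n i) -> vec Sd) fstar :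
  (forall i, is_compact (X i)) -> (forall i, convex_fun (f i)) -> (forall i s, convex_fun (fun z => g i z s)) ->
  P_optval X f g fstar -> exists xs, P_feasible X g xs /\ P_cost f xs <= fstar.
Proof.
  intros HX Hf Hg [Hinf1 Hinf2].
  assert (Hm : forall k : nat, exists y, P_feasible X g y /\ P_cost f y < fstar + / (INR k + 1)).
  { intros k. apply NNPP. intros Hn.
    assert (fstar + / (INR k + 1) <= fstar).
    { apply Hinf2. intros c [y [Hy ->]]. apply Rnot_lt_le. intros Hc. apply Hn. exists y; auto. }
    assert (0 < / (INR k + 1)) by (apply Rinv_0_lt_compat; pose proof (pos_INR k); lra). lra. }
  set (u := fun k => proj1_sig (constructive_indefinite_description _ (Hm k))).
  assert (Hu : forall k, P_feasible X g (u k) /\ P_cost f (u k) < fstar + / (INR k + 1)).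
  { intros k; unfold u; destruct (constructive_indefinite_description _ _); simpl; auto. }
  destruct (nested_all N n X HX u (fun k => proj1 (proj1 (Hu k)))) as [phi [p [Hi Hp]]].
  exists p. split; [split|].
  - intros i; apply Hp.
  - intros s. apply Rnot_lt_le. intros Hs.
    set (eta := fsum N (fun i => g i (p i) s) / 2).
    destruct (lsc_sum N n (fun i z => g i z s) (fun k => u (phi k)) p (fun i => Hg i s) (fun i => proj2 (Hp i)) eta) as [K HK].
    { unfold eta; lra. }
    specialize (HK K (le_n _)). simpl in HK. pose proof (proj2 (proj1 (Hu (phi K))) s). unfold eta in *. lra.
  - apply Rnot_lt_le. intros Hs.
    set (eta := (P_cost f p - fstar) / 2).
    destruct (lsc_sum N n f (fun k => u (phi k)) p Hf (fun i => proj2 (Hp i)) eta) as [K HK].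
    { unfold eta; lra. }
    destruct (inv_small eta) as [T HT]; [unfold eta; lra|].
    specialize (HK (max K T) (Nat.le_max_l _ _)).
    pose proof (proj2 (Hu (phi (max K T)))). unfold P_cost in *.
    pose proof (HT (phi (max K T))). pose proof (incr_ge phi Hi (max K T)).
    assert (/ (INR (phi (Init.Nat.max K T)) + 1) < eta) by (apply H0; lia).
    unfold eta in *. lra.
Qed.

Definition pos (x : R) := Rmax x 0.
Lemma pos_ge0 x : 0 <= pos x. Proof. unfold pos; apply Rmax_r. Qed.
Lemma pos_ge x : x <= pos x. Proof. unfold pos; apply Rmax_l. Qed.
Lemma pos_sq x d : pos (x + d) ^ 2 <= (pos x + d) ^ 2.
Proof. unfold pos, Rmax. destruct (Rle_dec (x + d) 0); destruct (Rle_dec x 0); nra. Qed.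

Definition rm_Z {S} (Rg : vec S) (R0 : R) := pos R0 + fsum S (fun s => pos (Rg s)).
Definition rm_mu {S} (K : R) (Rg : vec S) (R0 : R) : vec S :=
  fun s => if Rlt_dec 0 (rm_Z Rg R0) then K * pos (Rg s) / rm_Z Rg R0 else 0.
Definition rm_phi {S} (Rg : vec S) (R0 : R) := pos R0 ^ 2 + fsum S (fun s => pos (Rg s) ^ 2).

Lemma rm_Z_ge0 {S} (Rg : vec S) R0 : 0 <= rm_Z Rg R0.
Proof. unfold rm_Z. pose proof (pos_ge0 R0). pose proof (fsum_nonneg S (fun s => pos (Rg s)) (fun s => pos_ge0 _)). lra. Qed.

Lemma rm_mu_feas {S} K (Rg : vec S) R0 : 0 <= K -> vle (vzero S) (rm_mu K Rg R0) /\ fsum S (rm_mu K Rg R0) <= K.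
Proof.
  intros HK. unfold rm_mu. destruct (Rlt_dec 0 (rm_Z Rg R0)) as [Hz|Hz].
  - split.
    + intros s. unfold vzero. apply Rmult_le_pos; [apply Rmult_le_pos; auto; apply pos_ge0|]. left; apply Rinv_0_lt_compat; auto.
    + rewrite (fsum_ext _ _ (fun s => (K / rm_Z Rg R0) * pos (Rg s))) by (intros; unfold Rdiv; ring).
      rewrite fsum_scal. unfold Rdiv. rewrite Rmult_assoc.
      assert (fsum S (fun s => pos (Rg s)) <= rm_Z Rg R0) by (unfold rm_Z; pose proof (pos_ge0 R0); lra).
      assert (/ rm_Z Rg R0 * fsum S (fun s => pos (Rg s)) <= 1).
      { rewrite <- (Rinv_l (rm_Z Rg R0)) by lra. apply Rmult_le_compat_l; auto. left; apply Rinv_0_lt_compat; auto. }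
      assert (0 <= / rm_Z Rg R0 * fsum S (fun s => pos (Rg s))).
      { apply Rmult_le_pos. left; apply Rinv_0_lt_compat; auto. apply fsum_nonneg; intros; apply pos_ge0. }
      nra.
  - split. intros s; unfold vzero; lra. rewrite fsum_zero; auto.
Qed.

Lemma rm_cross {S} K (Rg : vec S) R0 (u : vec S) :
  let m := dot (rm_mu K Rg R0) u in
  fsum S (fun s => pos (Rg s) * (K * u s - m)) + pos R0 * (- m) = 0.
Proof.
  intros m. destruct (Rlt_dec 0 (rm_Z Rg R0)) as [Hz|Hz].
  - set (Z := rm_Z Rg R0) in *.
    set (A := fsum S (fun s => pos (Rg s) * u s)). set (P := fsum S (fun s => pos (Rg s))).
    assert (Hm : m = K / Z * A).
    { unfold m, dot, rm_mu. fold Z. destruct (Rlt_dec 0 Z); [|lra].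
      unfold A. rewrite <- fsum_scal. apply fsum_ext. intros; unfold Rdiv; ring. }
    rewrite (fsum_ext _ _ (fun s => K * (pos (Rg s) * u s) + (- m) * pos (Rg s))) by (intros; ring).
    rewrite fsum_plus, !fsum_scal. fold A P.
    assert (HZ : Z = pos R0 + P) by reflexivity.
    rewrite Hm. rewrite HZ in *. field. lra.
  - pose proof (rm_Z_ge0 Rg R0). assert (HZ0 : rm_Z Rg R0 = 0) by lra. unfold rm_Z in HZ0.
    pose proof (pos_ge0 R0). pose proof (fsum_nonneg S (fun s => pos (Rg s)) (fun s => pos_ge0 _)).
    assert (pos R0 = 0) by lra. assert (fsum S (fun s => pos (Rg s)) = 0) by lra.
    pose proof (fsum_eq0 S _ (fun s => pos_ge0 _) H3). simpl in H4.
    rewrite H2. rewrite (fsum_ext _ _ (fun _ => 0)). rewrite fsum_zero; ring.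
    intros s. rewrite H4. ring.
Qed.

Lemma abs_sq x c : Rabs x <= c -> x ^ 2 <= c ^ 2.
Proof. intros H. pose proof (Rabs_pos x). destruct (Rcase_abs x) as [h|h]; [rewrite Rabs_left in H by lra|rewrite Rabs_right in H by lra]; nra. Qed.

Lemma rm_step {S} K Bd (Rg : vec S) R0 (u : vec S) : 0 <= K -> 0 <= Bd -> (forall s, Rabs (u s) <= Bd) ->
  let m := dot (rm_mu K Rg R0) u in
  rm_phi (fun s => Rg s + (K * u s - m)) (R0 - m) <= rm_phi Rg R0 + (INR S + 1) * (2 * K * Bd) ^ 2.
Proof.
  intros HK HBd Hu m.
  destruct (rm_mu_feas K Rg R0 HK) as [Hmu1 Hmu2].
  assert (Hm : Rabs m <= K * Bd).
  { unfold m, dot. eapply Rle_trans; [apply fsum_abs|].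
    apply Rle_trans with (fsum S (fun s => rm_mu K Rg R0 s * Bd)).
    - apply fsum_le. intros s. rewrite Rabs_mult, Rabs_right by (apply Rle_ge, Hmu1).
      apply Rmult_le_compat_l; auto. apply Hmu1.
    - rewrite (fsum_ext _ _ (fun s => Bd * rm_mu K Rg R0 s)) by (intros; ring). rewrite fsum_scal. nra. }
  assert (Hd : forall s, (K * u s - m) ^ 2 <= (2 * K * Bd) ^ 2).
  { intros s. pose proof (Hu s). apply abs_sq.
    eapply Rle_trans; [apply Rabs_triang|]. rewrite Rabs_Ropp, Rabs_mult, (Rabs_right K) by lra.
    assert (K * Rabs (u s) <= K * Bd) by (apply Rmult_le_compat_l; auto). lra. }
  assert (Hm2 : m ^ 2 <= (2 * K * Bd) ^ 2).
  { apply abs_sq. nra. }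
  unfold rm_phi.
  assert (H1 : pos (R0 - m) ^ 2 <= (pos R0 - m) ^ 2).
  { replace (R0 - m) with (R0 + - m) by ring. replace (pos R0 - m) with (pos R0 + - m) by ring. apply pos_sq. }
  assert (H2 : fsum S (fun s => pos (Rg s + (K * u s - m)) ^ 2) <=
               fsum S (fun s => pos (Rg s) ^ 2 + 2 * (pos (Rg s) * (K * u s - m)) + (K * u s - m) ^ 2)).
  { apply fsum_le. intros s. eapply Rle_trans; [apply pos_sq|]. right; ring. }
  rewrite !fsum_plus, fsum_scal in H2.
  pose proof (rm_cross K Rg R0 u). simpl in H. fold m in H.
  assert (fsum S (fun s => (K * u s - m) ^ 2) <= INR S * (2 * K * Bd) ^ 2).
  { rewrite <- fsum_const. apply fsum_le. auto. }
  nra.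
Qed.

Fixpoint ssum (F : nat -> R) (T : nat) : R := match T with O => 0 | S T' => ssum F T' + F T' end.

Lemma ssum_lt F T c : (1 <= T)%nat -> (forall u, F u < c) -> ssum F T < INR T * c.
Proof. intros HT H. induction T; [lia|]. rewrite S_INR. simpl ssum. destruct T.
  - simpl. specialize (H 0%nat). lra.
  - assert (ssum F (S T) < INR (S T) * c) by (apply IHT; lia). specialize (H (S T)). lra. Qed.

Fixpoint rm_st {A : Type} {Sd : nat} (K : R) (h : A -> vec Sd) (br : vec Sd -> A) (t : nat) : vec Sd * R :=
  match t with
  | O => (vzero Sd, 0)
  | S t' => let p := rm_st K h br t' in
            let mu := rm_mu K (fst p) (snd p) in
            let a := br mu in
            let m := dot mu (h a) in
            ((fun s => fst p s + (K * h a s - m)), snd p - m)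
  end.

Fixpoint rm_avg {A : Type} (comb : R -> A -> A -> A) (a : nat -> A) (t : nat) : A :=
  match t with O => a O | S t' => comb (/ (INR t' + 2)) (a (S t')) (rm_avg comb a t') end.

Lemma rm_avg_prop {A : Type} (Xa : A -> Prop) (comb : R -> A -> A -> A) (F : A -> R) (a : nat -> A) :
  (forall th x y, 0 <= th <= 1 -> Xa x -> Xa y -> Xa (comb th x y)) ->
  (forall th x y, 0 <= th <= 1 -> Xa x -> Xa y -> F (comb th x y) <= th * F x + (1 - th) * F y) ->
  (forall t, Xa (a t)) ->
  forall t, Xa (rm_avg comb a t) /\ (INR t + 1) * F (rm_avg comb a t) <= ssum (fun u => F (a u)) (S t).
Proof.
  intros Hc HF Ha t. induction t.
  - simpl. split; auto. lra.
  - destruct IHt as [IH1 IH2]. simpl rm_avg.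
    assert (Hth : 0 <= / (INR t + 2) <= 1).
    { pose proof (pos_INR t). split. left; apply Rinv_0_lt_compat; lra.
      rewrite <- Rinv_1. apply Rinv_le_contravar; lra. }
    split; [apply Hc; auto|].
    pose proof (HF _ _ _ Hth (Ha (S t)) IH1).
    replace (ssum (fun u => F (a u)) (S (S t))) with (ssum (fun u => F (a u)) (S t) + F (a (S t))) by reflexivity.
    rewrite S_INR. pose proof (pos_INR t).
    apply (Rmult_le_compat_l (INR t + 2)) in H; [|lra].
    replace ((INR t + 2) * (/ (INR t + 2) * F (a (S t)) + (1 - / (INR t + 2)) * F (rm_avg comb a t)))
      with (F (a (S t)) + (INR t + 1) * F (rm_avg comb a t)) in H by (field; lra).
    lra.
Qed.

Lemma minimax (A : Type) (Xa : A -> Prop) (comb : R -> A -> A -> A) (f : A -> R) (Sd : nat)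
  (h : A -> vec Sd) (K B : R) :
  0 < K -> 0 <= B -> (exists a, Xa a) ->
  (forall th x y, 0 <= th <= 1 -> Xa x -> Xa y -> Xa (comb th x y)) ->
  (forall th x y, 0 <= th <= 1 -> Xa x -> Xa y -> f (comb th x y) <= th * f x + (1 - th) * f y) ->
  (forall th x y s, 0 <= th <= 1 -> Xa x -> Xa y -> h (comb th x y) s <= th * h x s + (1 - th) * h y s) ->
  (forall a s, Xa a -> Rabs (h a s) <= B) ->
  forall b, (forall a r, Xa a -> 0 <= r -> (forall s, h a s <= r) -> b <= f a + K * r) ->
  forall eps, 0 < eps -> exists mu, vle (vzero Sd) mu /\ fsum Sd mu <= K /\
    forall a, Xa a -> b - eps <= f a + dot mu (h a).
Proof.
  intros HK HB Hne Hc Hfc Hhc HhB b Hb eps He.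
  apply NNPP. intros Hn.
  assert (Hbr : forall mu : vec Sd, exists a, Xa a /\ (vle (vzero Sd) mu -> fsum Sd mu <= K -> f a + dot mu (h a) < b - eps)).
  { intros mu. destruct Hne as [a0 Ha0]. destruct (classic (vle (vzero Sd) mu /\ fsum Sd mu <= K)) as [[H1 H2]|H].
    - apply NNPP. intros H3. apply Hn. exists mu. split; auto. split; auto. intros a Ha.
      apply Rnot_lt_le. intros H4. apply H3. exists a. split; auto.
    - exists a0. split; auto. intros; exfalso; auto. }
  set (br := fun mu => proj1_sig (constructive_indefinite_description _ (Hbr mu))).
  assert (Hbr' : forall mu, Xa (br mu) /\ (vle (vzero Sd) mu -> fsum Sd mu <= K -> f (br mu) + dot mu (h (br mu)) < b - eps)).
  { intros mu. unfold br. destruct (constructive_indefinite_description _ _); simpl; auto. }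
  set (st := rm_st K h br).
  set (mu := fun t => rm_mu K (fst (st t)) (snd (st t))).
  set (a := fun t => br (mu t)).
  set (m := fun t => dot (mu t) (h (a t))).
  assert (Hst : forall t, st (S t) = ((fun s => fst (st t) s + (K * h (a t) s - m t)), snd (st t) - m t)) by reflexivity.
  assert (Ha : forall t, Xa (a t)) by (intros; apply Hbr').
  assert (Hfm : forall t, f (a t) + m t < b - eps).
  { intros t. destruct (rm_mu_feas K (fst (st t)) (snd (st t))) as [H1 H2]; [lra|]. apply Hbr'; auto. }
  assert (F1 : forall t s, fst (st t) s = K * ssum (fun u => h (a u) s) t - ssum m t).
  { induction t; intros s. simpl. unfold vzero. ring. rewrite Hst. simpl fst. rewrite IHt. simpl ssum. ring. }
  assert (F0 : forall t, snd (st t) = - ssum m t).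
  { induction t. simpl. ring. rewrite Hst. simpl snd. rewrite IHt. simpl ssum. ring. }
  set (Dc := (INR Sd + 1) * (2 * K * B) ^ 2).
  assert (F2 : forall t, rm_phi (fst (st t)) (snd (st t)) <= INR t * Dc).
  { induction t.
    - simpl. unfold rm_phi, vzero, pos. rewrite (fsum_ext _ _ (fun _ => 0)). rewrite fsum_zero.
      rewrite Rmax_right by lra. lra. intros; rewrite Rmax_right by lra; ring.
    - rewrite Hst, S_INR. pose proof (rm_step K B (fst (st t)) (snd (st t)) (h (a t)) (Rlt_le _ _ HK) HB (fun s => HhB _ s (Ha t))) as Hs.
      cbv zeta in Hs. fold (mu t) in Hs. fold (m t) in Hs. unfold Dc in *. simpl fst; simpl snd. lra. }
  destruct (inv_small (eps ^ 2 / (Dc + 1))) as [t0 Ht0].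
  { apply Rdiv_lt_0_compat. nra. unfold Dc. pose proof (pos_INR Sd). nra. }
  set (T := S t0).
  assert (HT : Dc < INR T * eps ^ 2).
  { pose proof (Ht0 t0 (le_n _)). unfold T. rewrite S_INR.
    assert (0 < Dc + 1) by (unfold Dc; pose proof (pos_INR Sd); nra).
    pose proof (pos_INR t0).
    apply (Rmult_lt_compat_r ((INR t0 + 1) * (Dc + 1))) in H; [|nra].
    replace (/ (INR t0 + 1) * ((INR t0 + 1) * (Dc + 1))) with (Dc + 1) in H by (field; lra).
    replace (eps ^ 2 / (Dc + 1) * ((INR t0 + 1) * (Dc + 1))) with ((INR t0 + 1) * eps ^ 2) in H by (field; lra).
    lra. }
  assert (HTp : 0 < INR T) by (unfold T; rewrite S_INR; pose proof (pos_INR t0); lra).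
  assert (Hreg : forall x, pos x ^ 2 <= rm_phi (fst (st T)) (snd (st T)) -> x <= INR T * eps).
  { intros x H2. pose proof (F2 T). apply Rnot_lt_le. intros H3.
    assert (INR T * Dc < (INR T * eps) ^ 2).
    { apply (Rmult_lt_compat_l (INR T)) in HT; auto. replace ((INR T * eps) ^ 2) with (INR T * (INR T * eps ^ 2)) by ring. auto. }
    assert (0 < INR T * eps) by (apply Rmult_lt_0_compat; auto).
    assert ((INR T * eps) * (INR T * eps) < x * x) by (apply Rmult_le_0_lt_compat; lra).
    assert (Hpx : pos x = x) by (unfold pos; apply Rmax_left; lra). rewrite Hpx in H2. nra. }
  assert (HRg : forall s, fst (st T) s <= INR T * eps).
  { intros s. apply Hreg.
    - unfold rm_phi. pose proof (pos_ge0 (snd (st T))).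
      pose proof (fsum_ge_term Sd (fun s => pos (fst (st T) s) ^ 2) s (fun s => pow2_ge_0 _)). cbv beta in H0. nra. }
  assert (HR0 : snd (st T) <= INR T * eps).
  { apply Hreg.
    - unfold rm_phi. pose proof (fsum_nonneg Sd (fun s => pos (fst (st T) s) ^ 2) (fun s => pow2_ge_0 _)). nra. }
  set (SM := ssum m T). set (SF := ssum (fun u => f (a u)) T).
  assert (HSFM : SF + SM < INR T * (b - eps)).
  { unfold SF, SM. assert (ssum (fun u => f (a u) + m u) T < INR T * (b - eps)) by (apply ssum_lt; [unfold T; lia|auto]).
    assert (forall F G T, ssum (fun u => F u + G u) T = ssum F T + ssum G T) by (induction T0; simpl; [lra|rewrite IHT0; ring]).
    rewrite H0 in H. auto. }
  set (abar := rm_avg comb a t0).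
  set (r := (SM + INR T * eps) / (INR T * K)).
  assert (Hr0 : 0 <= r).
  { unfold r. apply Rmult_le_pos; [|left; apply Rinv_0_lt_compat; nra]. rewrite F0 in HR0. fold SM in HR0. lra. }
  assert (Hab : Xa abar) by (apply (rm_avg_prop Xa comb f a Hc Hfc Ha t0)).
  assert (Hhr : forall s, h abar s <= r).
  { intros s. destruct (rm_avg_prop Xa comb (fun z => h z s) a Hc (fun th x y Hth Hx Hy => Hhc th x y s Hth Hx Hy) Ha t0) as [_ H].
    fold abar in H. fold T in H. rewrite <- S_INR in H. fold T in H.
    pose proof (HRg s). rewrite F1 in H0. fold SM in H0.
    unfold r. apply (Rmult_le_reg_l (INR T * K)); [nra|].
    replace (INR T * K * ((SM + INR T * eps) / (INR T * K))) with (SM + INR T * eps) by (field; lra). nra. }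
  pose proof (Hb abar r Hab Hr0 Hhr).
  destruct (rm_avg_prop Xa comb f a Hc Hfc Ha t0) as [_ Hf2]. fold abar in Hf2. rewrite <- S_INR in Hf2. fold T in Hf2. fold SF in Hf2.
  assert (K * r = (SM + INR T * eps) / INR T) by (unfold r; field; lra).
  assert (INR T * b <= SF + SM + INR T * eps).
  { apply (Rmult_le_compat_l (INR T)) in H; [|lra]. rewrite Rmult_plus_distr_l, H0 in H.
    replace (INR T * ((SM + INR T * eps) / INR T)) with (SM + INR T * eps) in H by (field; lra). lra. }
  nra.
Qed.

Lemma fin_bound {N} (P : Fin.t N -> R -> Prop) :
  (forall i B B', P i B -> B <= B' -> P i B') -> (forall i, exists B, P i B) ->
  exists B, 0 <= B /\ forall i, P i B.
Proof.
  intros Hm H.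
  set (Bf := fun i => proj1_sig (constructive_indefinite_description _ (H i))).
  assert (HB : forall i, P i (Bf i)) by (intros i; unfold Bf; destruct (constructive_indefinite_description _ _); auto).
  exists (fsum N (fun i => Rabs (Bf i))). split. apply fsum_nonneg; intros; apply Rabs_pos.
  intros i. apply (Hm i (Bf i)); auto. eapply Rle_trans; [apply Rle_abs|].
  apply (fsum_ge_term N (fun i => Rabs (Bf i))). intros; apply Rabs_pos.
Qed.

Lemma g_bounded m Sd (X : vec m -> Prop) (g : vec m -> vec Sd) : is_compact X ->
  (forall s, convex_fun (fun z => g z s)) -> exists B, 0 <= B /\ forall s y, X y -> Rabs (g y s) <= B.
Proof.
  intros HX Hg. destruct (fin_bound (fun s B => forall y, X y -> Rabs (g y s) <= B)) as [B [HB1 HB2]].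
  - intros s B B' H1 H2 y Hy. specialize (H1 y Hy). lra.
  - intros s. apply (conv_bounded m X (fun z => g z s) HX (Hg s)).
  - exists B. split; auto.
Qed.

Lemma inf_exists (A : R -> Prop) : (exists c, A c) -> (exists lb, forall c, A c -> lb <= c) -> exists v, is_inf A v.
Proof.
  intros [c Hc] [lb Hlb].
  destruct (completeness (fun x => A (- x))) as [m [Hm1 Hm2]].
  - exists (- lb). intros x Hx. specialize (Hlb _ Hx). lra.
  - exists (- c). rewrite Ropp_involutive. auto.
  - exists (- m). split.
    + intros c' Hc'. assert (- c' <= m) by (apply Hm1; rewrite Ropp_involutive; auto). lra.
    + intros b Hb. assert (m <= - b). { apply Hm2. intros x Hx. specialize (Hb _ Hx). lra. } lra.
Qed.

Lemma local_subgrad m Sd (X : vec m -> Prop) (f : vec m -> R) (g : vec m -> vec Sd) M c x rho mu :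
  is_compact X -> convex_set X -> convex_fun f -> (forall s, convex_fun (fun z => g z s)) -> 0 < M ->
  loc_pd_opt X f g M c x rho mu ->
  vle (vzero Sd) mu /\ fsum Sd mu <= M /\
  forall x' r' c', X x' -> 0 <= r' -> (forall s, g x' s + c' s <= r') ->
    f x + M * rho + dot mu (vsub c' c) <= f x' + M * r'.
Proof.
  intros HX HXc Hf Hg HM [[Hfeas Hopt] [Hmu0 Hdual]].
  destruct (g_bounded m Sd X g HX Hg) as [Bg [HBg0 HBg]].
  set (v := f x + M * rho).
  assert (Hmain : forall y r, X y -> 0 <= r -> v <= loc_lagr f g M c mu y r).
  { intros y r Hy Hr. apply Rnot_lt_le. intros Hlt.
    set (eps := (v - loc_lagr f g M c mu y r) / 2).
    destruct (minimax (vec m) X (fun th a b => vadd (vscale th a) (vscale (1 - th) b)) f Sd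
                (fun a s => g a s + c s) M (Bg + norm1 c)) with (b := v) (eps := eps) as [mu' [Hm1 [Hm2 Hm3]]].
    - auto.
    - pose proof (norm1_nonneg c); lra.
    - exists x. apply Hfeas.
    - intros th a b Hth Ha Hb. apply HXc; auto.
    - intros th a b Hth Ha Hb. apply Hf; auto.
    - intros th a b s Hth Ha Hb. pose proof (Hg s a b th Hth). simpl in H. lra.
    - intros a s Ha. eapply Rle_trans; [apply Rabs_triang|]. pose proof (HBg s a Ha). pose proof (norm1_coord c s). lra.
    - intros a r0 Ha Hr0 Hs. apply Hopt. split; auto.
    - unfold eps; lra.
    - assert (Hlb : forall y r, X y -> 0 <= r -> v - eps <= loc_lagr f g M c mu' y r).
      { intros y0 r0 Hy0 Hr0. unfold loc_lagr. rewrite dot_sub_r, dot_const_r.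
        pose proof (Hm3 y0 Hy0). assert (r0 * fsum Sd mu' <= M * r0) by nra.
        change (dot mu' (vadd (g y0) c)) with (dot mu' (fun s => g y0 s + c s)). lra. }
      pose proof (Hdual mu' Hm1 (v - eps) Hlb y r Hy Hr). unfold eps in H. lra. }
  assert (Hsum : fsum Sd mu <= M).
  { apply Rnot_lt_le. intros Hlt.
    set (C0 := f x + dot mu (vadd (g x) c)).
    set (r := (Rabs C0 + Rabs v + 1) / (fsum Sd mu - M)).
    assert (Hr : 0 <= r) by (unfold r; apply Rmult_le_pos; [pose proof (Rabs_pos C0); pose proof (Rabs_pos v); lra|left; apply Rinv_0_lt_compat; lra]).
    pose proof (Hmain x r (proj1 (proj2 Hfeas)) Hr). unfold loc_lagr in H. rewrite dot_sub_r, dot_const_r in H. fold C0 in H.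
    assert (r * (fsum Sd mu - M) = Rabs C0 + Rabs v + 1) by (unfold r; field; lra).
    pose proof (Rle_abs C0). pose proof (Rle_abs v). pose proof (Rle_abs (- v)). rewrite Rabs_Ropp in H3. assert (C0 = f x + dot mu (vadd (g x) c)) by reflexivity. nra. }
  split; auto. split; auto.
  intros x' r' c' Hx' Hr' Hc'.
  pose proof (Hmain x' r' Hx' Hr'). unfold loc_lagr in H. rewrite dot_sub_r, dot_plus_r, dot_const_r in H.
  assert (dot mu (vadd (g x') c') <= dot mu (vconst Sd r')) by (apply dot_le_r; auto).
  rewrite dot_plus_r, dot_const_r in H0. rewrite dot_sub_r. fold v. lra.
Qed.

Lemma nbsum_lin {N Sd} (E : Fin.t N -> Fin.t N -> bool) (l1 l2 : Fin.t N -> Fin.t N -> vec Sd) i s :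
  nbsum E (fun a b t => l1 a b t + l2 a b t) i s = nbsum E l1 i s + nbsum E l2 i s.
Proof. unfold nbsum. rewrite <- fsum_plus. apply fsum_ext. intros j. destruct (E i j); ring. Qed.

Lemma path_flow {N Sd} (E : Fin.t N -> Fin.t N -> bool) : (forall i j, E i j = E j i) -> (forall i, E i i = false) ->
  forall i j, Relation_Operators.clos_refl_trans (Fin.t N) (fun a b => E a b = true) i j ->
  forall a : vec Sd, exists lam : Fin.t N -> Fin.t N -> vec Sd, forall k s,
    nbsum E lam k s = (if Fin.eq_dec k i then a s else 0) - (if Fin.eq_dec k j then a s else 0).
Proof.
  intros Hsym Hirr i j Hp. induction Hp as [x y Hxy|x|x y z _ IH1 _ IH2]; intros a.
  - assert (Hne : x <> y) by (intros ->; rewrite Hirr in Hxy; discriminate).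
    exists (fun p q => if Fin.eq_dec p x then if Fin.eq_dec q y then a else vzero Sd else vzero Sd).
    intros k s. unfold nbsum.
    destruct (Fin.eq_dec k x) as [->|Hkx].
    + destruct (Fin.eq_dec x y) as [e|_]; [contradiction|].
      rewrite (fsum_ext _ _ (fun l => if Fin.eq_dec l y then a s else 0)).
      * rewrite fsum_delta. ring.
      * intros l. destruct (Fin.eq_dec x x) as [_|e]; [|congruence].
        destruct (Fin.eq_dec l y) as [->|Hly].
        -- rewrite Hxy. destruct (Fin.eq_dec y x); [congruence|]. unfold vzero; ring.
        -- destruct (E x l); [|auto]. destruct (Fin.eq_dec l x) as [->|]; unfold vzero.
           ++ destruct (Fin.eq_dec x y); [congruence|]. ring.
           ++ ring.
    + rewrite (fsum_ext _ _ (fun l => if Fin.eq_dec l x then (if Fin.eq_dec k y then - a s else 0) else 0)).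
      * rewrite fsum_delta. destruct (Fin.eq_dec k y); ring.
      * intros l. destruct (Fin.eq_dec l x) as [->|Hlx].
        -- destruct (Fin.eq_dec k y) as [->|Hky].
           ++ assert (E y x = true) by (rewrite Hsym; auto). rewrite H. destruct (Fin.eq_dec y x); [congruence|].
              destruct (Fin.eq_dec x x); [|congruence]. destruct (Fin.eq_dec y y); [|congruence]. unfold vzero; ring.
           ++ destruct (E k x); auto. destruct (Fin.eq_dec x x); [|congruence]. destruct (Fin.eq_dec k y); [congruence|].
              unfold vzero; ring.
        -- destruct (E k l); auto. unfold vzero. destruct (Fin.eq_dec k x); [congruence|]. destruct (Fin.eq_dec l x); [congruence|]. ring.
  - exists (fun _ _ => vzero Sd). intros k s. unfold nbsum, vzero. rewrite (fsum_ext _ _ (fun _ => 0)).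
    rewrite fsum_zero. ring. intros l; destruct (E k l); ring.
  - destruct (IH1 a) as [l1 H1]. destruct (IH2 a) as [l2 H2].
    exists (fun p q t => l1 p q t + l2 p q t). intros k s. rewrite nbsum_lin, H1, H2. ring.
Qed.

Lemma fsum_delta_dep (n : nat) (k : Fin.t n) (F : Fin.t n -> R) :
  fsum n (fun i => if Fin.eq_dec k i then F i else 0) = F k.
Proof.
  rewrite (fsum_ext n _ (fun i => if Fin.eq_dec i k then F k else 0)). apply fsum_delta.
  intros i. destruct (Fin.eq_dec k i) as [h1|h1]; destruct (Fin.eq_dec i k) as [h2|h2]; subst; auto; congruence.
Qed.

Lemma nbsum_fsum {N Sd} (E : Fin.t N -> Fin.t N -> bool) (L : Fin.t N -> Fin.t N -> Fin.t N -> vec Sd) k s :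
  nbsum E (fun p q t => fsum N (fun i => L i p q t)) k s = fsum N (fun i => nbsum E (L i) k s).
Proof.
  unfold nbsum. rewrite fsum_swap. apply fsum_ext. intros j. destruct (E k j).
  - rewrite fsum_minus. reflexivity.
  - rewrite fsum_zero. reflexivity.
Qed.

Lemma nb_realize {N Sd} (E : Fin.t N -> Fin.t N -> bool) :
  (forall i j, E i j = E j i) -> (forall i, E i i = false) -> connected E -> (0 < N)%nat ->
  forall y : Fin.t N -> vec Sd, (forall s, fsum N (fun i => y i s) = 0) ->
  exists lam, forall i s, nbsum E lam i s = y i s.
Proof.
  intros Hsym Hirr Hcon HN y Hy.
  destruct N as [|N']; [lia|]. set (r := @Fin.F1 N').
  assert (H : forall i, exists lam : Fin.t (S N') -> Fin.t (S N') -> vec Sd, forall k s,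
    nbsum E lam k s = (if Fin.eq_dec k i then y i s else 0) - (if Fin.eq_dec k r then y i s else 0)).
  { intros i. apply path_flow; auto. }
  set (L := fun i => proj1_sig (constructive_indefinite_description _ (H i))).
  assert (HL : forall i k s, nbsum E (L i) k s = (if Fin.eq_dec k i then y i s else 0) - (if Fin.eq_dec k r then y i s else 0)).
  { intros i. unfold L. destruct (constructive_indefinite_description _ _); simpl; auto. }
  exists (fun p q t => fsum (S N') (fun i => L i p q t)). intros k s.
  rewrite nbsum_fsum. rewrite (fsum_ext _ _ (fun i => (if Fin.eq_dec k i then y i s else 0) - (if Fin.eq_dec k r then y i s else 0))) by (intros i; apply HL).
  rewrite fsum_minus, fsum_delta_dep. destruct (Fin.eq_dec k r).
  - rewrite Hy. ring.
  - rewrite fsum_zero. ring.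
Qed.

Lemma pos_lb {N} (u : Fin.t N -> R) : (forall k, 0 < u k) -> exists d, 0 < d /\ forall k, d <= u k.
Proof.
  intros H. destruct (fin_bound (fun k B => / u k <= B)) as [B [HB0 HB]].
  - intros; lra.
  - intros k; exists (/ u k); lra.
  - exists (/ (B + 1)). split. apply Rinv_0_lt_compat; lra.
    intros k. specialize (HB k). specialize (H k). rewrite <- (Rinv_inv (u k)).
    apply Rinv_le_contravar. apply Rinv_0_lt_compat; auto. lra.
Qed.

Definition pcomb {N} {n : Fin.t N -> nat} (th : R) (a b : forall i, vec (n i)) : forall i, vec (n i) :=
  fun i => vadd (vscale th (a i)) (vscale (1 - th) (b i)).

Lemma psum_convex {N} {n : Fin.t N -> nat} (h : forall i, vec (n i) -> R) th a b :
  (forall i, convex_fun (h i)) -> 0 <= th <= 1 ->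
  fsum N (fun i => h i (pcomb th a b i)) <= th * fsum N (fun i => h i (a i)) + (1 - th) * fsum N (fun i => h i (b i)).
Proof.
  intros Hh Hth. rewrite <- !fsum_scal, <- fsum_plus. apply fsum_le. intros i. apply Hh; auto.
Qed.

Lemma sum_lagr (N Sd : nat) (n : Fin.t N -> nat) (f : forall i, vec (n i) -> R) (g : forall i, vec (n i) -> vec Sd) mu z :
  fsum N (fun i => f i (z i) + dot mu (g i (z i))) = P_cost f z + dot mu (fun s => fsum N (fun i => g i (z i) s)).
Proof.
  rewrite fsum_plus. unfold P_cost, dot. f_equal. rewrite fsum_swap. apply fsum_ext. intros s.
  rewrite fsum_scal. reflexivity.
Qed.

Lemma sum_q_ge (N Sd : nat) (n : Fin.t N -> nat) (X : forall i, vec (n i) -> Prop)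
  (f : forall i, vec (n i) -> R) (g : forall i, vec (n i) -> vec Sd) mu (qv : Fin.t N -> R) :
  (forall i, q_val X f g i mu (qv i)) -> forall c,
  (forall z, (forall i, X i (z i)) -> c <= fsum N (fun i => f i (z i) + dot mu (g i (z i)))) -> c <= fsum N qv.
Proof.
  intros Hq c Hc. apply Rnot_lt_le. intros Hlt.
  set (d := (c - fsum N qv) / (INR N + 1)).
  assert (Hd : 0 < d) by (unfold d; apply Rdiv_lt_0_compat; pose proof (pos_INR N); lra).
  assert (Hy : forall i, exists y, X i y /\ f i y + dot mu (g i y) < qv i + d).
  { intros i. apply NNPP. intros Hn. destruct (Hq i) as [_ H2].
    assert (qv i + d <= qv i).
    { apply H2. intros c0 [y [Hy ->]]. apply Rnot_lt_le. intros H3. apply Hn. exists y; auto. }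
    lra. }
  set (z := fun i => proj1_sig (constructive_indefinite_description _ (Hy i))).
  assert (Hz : forall i, X i (z i) /\ f i (z i) + dot mu (g i (z i)) < qv i + d).
  { intros i. unfold z. destruct (constructive_indefinite_description _ _); simpl; auto. }
  pose proof (Hc z (fun i => proj1 (Hz i))).
  assert (fsum N (fun i => f i (z i) + dot mu (g i (z i))) <= fsum N (fun i => qv i + d)).
  { apply fsum_le. intros i. left. apply Hz. }
  rewrite (fsum_plus N qv (fun _ => d)), fsum_const in H0.
  assert (INR N * d < c - fsum N qv).
  { unfold d. apply (Rmult_lt_reg_r (INR N + 1)); [pose proof (pos_INR N); lra|].
    replace (INR N * ((c - fsum N qv) / (INR N + 1)) * (INR N + 1)) with (INR N * (c - fsum N qv)) by (field; pose proof (pos_INR N); lra).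
    pose proof (pos_INR N). nra. }
  lra.
Qed.

Lemma exact_penalty (N Sd : nat) (n : Fin.t N -> nat) (X : forall i, vec (n i) -> Prop)
  (f : forall i, vec (n i) -> R) (g : forall i, vec (n i) -> vec Sd) (mustar : vec Sd) (fstar : R) :
  (0 < N)%nat -> (forall i, convex_fun (f i)) -> (forall i, is_compact (X i)) -> (forall i, convex_set (X i)) ->
  (forall i s, convex_fun (fun z => g i z s)) ->
  (exists xbar : forall i, vec (n i), (forall i, relint (X i) (xbar i)) /\
      vlt (fun s => fsum N (fun i => g i (xbar i) s)) (vzero Sd)) ->
  D_optimal X f g mustar -> P_optval X f g fstar ->
  forall z R0, (forall i, X i (z i)) -> 0 <= R0 -> (forall s, fsum N (fun i => g i (z i) s) <= R0) ->
  fstar <= P_cost f z + norm1 mustar * R0.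
Proof.
  intros HN Hf HX HXc Hg [xbar [Hxb1 Hxb2]] [Hms0 Hmsopt] [Hinf1 Hinf2].
  destruct (fin_bound (fun i B => forall y, X i y -> Rabs (f i y) <= B)) as [Bf [HBf0 HBf]].
  { intros i B B' H1 H2 y Hy; specialize (H1 y Hy); lra. }
  { intros i; apply conv_bounded; auto. }
  destruct (fin_bound (fun i B => forall s y, X i y -> Rabs (g i y s) <= B)) as [Bg [HBg0 HBg]].
  { intros i B B' H1 H2 s y Hy; specialize (H1 s y Hy); lra. }
  { intros i. destruct (g_bounded _ Sd (X i) (g i) (HX i) (Hg i)) as [B [_ HB]]. exists B; auto. }
  assert (Hxbar : forall i, X i (xbar i)) by (intros i; apply Hxb1).
  destruct (pos_lb (fun s => - fsum N (fun i => g i (xbar i) s))) as [d [Hd Hds]].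
  { intros s. specialize (Hxb2 s). unfold vzero in Hxb2. lra. }
  assert (Hfs_le : fstar <= P_cost f xbar).
  { apply Hinf1. exists xbar. split; auto. split; auto. intros s. specialize (Hxb2 s). unfold vzero in Hxb2. lra. }
  set (Kp := (P_cost f xbar - fstar) / d + 1).
  assert (HKp : 0 < Kp) by (unfold Kp; assert (0 <= (P_cost f xbar - fstar) / d) by (apply Rmult_le_pos; [lra|left; apply Rinv_0_lt_compat; lra]); lra).
  assert (Hpen : forall z r, (forall i, X i (z i)) -> 0 <= r -> (forall s, fsum N (fun i => g i (z i) s) <= r) ->
                 fstar <= P_cost f z + Kp * r).
  { intros z0 r Hz Hr Hzs.
    set (th := d / (r + d)).
    assert (Hth : 0 <= th <= 1).
    { unfold th. split. apply Rmult_le_pos; [lra|left; apply Rinv_0_lt_compat; lra].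
      apply (Rmult_le_reg_r (r + d)); [lra|]. unfold Rdiv. rewrite Rmult_assoc, Rinv_l by lra. lra. }
    set (w := pcomb th z0 xbar).
    assert (Hw : P_feasible X g w).
    { split. intros i; apply HXc; auto.
      intros s. eapply Rle_trans; [apply (psum_convex (fun i y => g i y s)); auto; intros; apply Hg|].
      pose proof (Hzs s). pose proof (Hds s). simpl in H0.
      assert (th * fsum N (fun i => g i (z0 i) s) <= th * r) by (apply Rmult_le_compat_l; lra).
      assert ((1 - th) * fsum N (fun i => g i (xbar i) s) <= (1 - th) * (- d)) by (apply Rmult_le_compat_l; lra).
      assert (th * r + (1 - th) * (- d) = 0) by (unfold th; field; lra). lra. }
    assert (fstar <= P_cost f w) by (apply Hinf1; exists w; auto).
    assert (P_cost f w <= th * P_cost f z0 + (1 - th) * P_cost f xbar) by (apply psum_convex; auto).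
    assert (Hr2 : fstar * (r + d) <= d * P_cost f z0 + r * P_cost f xbar).
    { assert (fstar <= th * P_cost f z0 + (1 - th) * P_cost f xbar) by lra.
      apply (Rmult_le_compat_l (r + d)) in H1; [|lra].
      replace ((r + d) * (th * P_cost f z0 + (1 - th) * P_cost f xbar)) with (d * P_cost f z0 + r * P_cost f xbar) in H1
        by (unfold th; field; lra). lra. }
    assert (Kp * r * d >= r * (P_cost f xbar - fstar)).
    { unfold Kp. replace (((P_cost f xbar - fstar) / d + 1) * r * d) with (r * (P_cost f xbar - fstar) + r * d) by (field; lra). nra. }
    apply (Rmult_le_reg_r d); [lra|]. nra. }
  assert (Hdual : forall eps, 0 < eps -> exists mu', vle (vzero Sd) mu' /\
            forall z, (forall i, X i (z i)) -> fstar - eps <= P_cost f z + dot mu' (fun s => fsum N (fun i => g i (z i) s))).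
  { intros eps He.
    destruct (minimax (forall i, vec (n i)) (fun z => forall i, X i (z i)) pcomb (P_cost f) Sd
               (fun z s => fsum N (fun i => g i (z i) s)) Kp (INR N * Bg)) with (b := fstar) (eps := eps) as [mu' [H1 [H2 H3]]]; auto.
    - pose proof (pos_INR N); nra.
    - exists xbar; auto.
    - intros th a b Hth Ha Hb i. apply HXc; auto.
    - intros th a b Hth Ha Hb. apply psum_convex; auto.
    - intros th a b s Hth Ha Hb. apply (psum_convex (fun i y => g i y s)); auto.
    - intros a s Ha. apply fsum_bound. intros i; apply HBg; auto.
    - exists mu'; auto. }
  assert (Hq : forall mu, exists qv : Fin.t N -> R, forall i, q_val X f g i mu (qv i)).
  { intros mu.
    assert (H : forall i, exists v, q_val X f g i mu v).
    { intros i. apply inf_exists.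
      - exists (f i (xbar i) + dot mu (g i (xbar i))), (xbar i); auto.
      - exists (- (Bf + INR Sd * (Rabs (norm1 mu) * Bg))). intros c [y [Hy ->]].
        pose proof (HBf i y Hy). assert (Rabs (dot mu (g i y)) <= INR Sd * (norm1 mu * Bg)).
        { unfold dot. apply fsum_bound. intros s. rewrite Rabs_mult.
          apply Rmult_le_compat; try apply Rabs_pos. apply norm1_coord. apply HBg; auto. }
        pose proof (Rle_abs (norm1 mu)). rewrite Rabs_right in * by (apply Rle_ge, norm1_nonneg).
        pose proof (Rle_abs (- dot mu (g i y))). pose proof (Rle_abs (- f i y)). rewrite Rabs_Ropp in *. lra. }
    exists (fun i => proj1_sig (constructive_indefinite_description _ (H i))).
    intros i. destruct (constructive_indefinite_description _ _); simpl; auto. }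
  destruct (Hq mustar) as [qs Hqs].
  assert (Hqs_ge : fstar <= fsum N qs).
  { apply Rnot_lt_le. intros Hlt. set (eps := (fstar - fsum N qs) / 2).
    destruct (Hdual eps) as [mu' [Hmu'0 Hmu']]; [unfold eps; lra|].
    destruct (Hq mu') as [qv' Hqv'].
    pose proof (Hmsopt mu' Hmu'0 qs qv' Hqs Hqv').
    assert (fstar - eps <= fsum N qv').
    { apply (sum_q_ge N Sd n X f g mu' qv' Hqv'). intros z0 Hz0. rewrite sum_lagr. auto. }
    unfold eps in *. lra. }
  intros z R0 Hz HR0 Hzs.
  assert (Hz2 : fsum N qs <= P_cost f z + dot mustar (fun s => fsum N (fun i => g i (z i) s))).
  { rewrite <- sum_lagr. apply fsum_le. intros i. apply (proj1 (Hqs i)). exists (z i); auto. }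
  assert (dot mustar (fun s => fsum N (fun i => g i (z i) s)) <= dot mustar (vconst Sd R0)) by (apply dot_le_r; auto).
  rewrite dot_const_r in H.
  assert (norm1 mustar = fsum Sd mustar).
  { unfold norm1. apply fsum_ext. intros s. apply Rabs_right. apply Rle_ge, Hms0. }
  rewrite H0. lra.
Qed.

Lemma least_nat (P : nat -> Prop) : (exists n, P n) -> exists n, P n /\ forall m, (m < n)%nat -> ~ P m.
Proof.
  intros [n Hn]. revert Hn. induction n as [n IH] using lt_wf_ind. intros Hn.
  destruct (classic (exists m, (m < n)%nat /\ P m)) as [[m [Hm1 Hm2]]|Hno].
  - apply (IH m Hm1 Hm2).
  - exists n. split; auto. intros m Hm HP. apply Hno. exists m; auto.
Qed.

Lemma sum_f_ssum F T : sum_f_R0 F T = ssum F (S T).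
Proof. induction T; simpl; [ring|]. rewrite IHT. simpl. ring. Qed.

Lemma ssum_mono F a b : (forall u, 0 <= F u) -> (a <= b)%nat -> ssum F a <= ssum F b.
Proof. intros H Hab. induction Hab; [lra|]. simpl. specialize (H m). lra. Qed.

Lemma ssum_range F H t k : (forall u, (t <= u)%nat -> (u < t + k)%nat -> H u <= F u) ->
  ssum H (t + k) - ssum H t <= ssum F (t + k) - ssum F t.
Proof.
  induction k; intros Hu.
  - rewrite Nat.add_0_r. lra.
  - rewrite Nat.add_succ_r. simpl. assert (H (t + k)%nat <= F (t + k)%nat) by (apply Hu; lia).
    assert (ssum H (t + k) - ssum H t <= ssum F (t + k) - ssum F t) by (apply IHk; intros; apply Hu; lia). lra.
Qed.

Lemma ssum_scal F c T : ssum (fun u => c * F u) T = c * ssum F T.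
Proof. induction T; simpl; [ring|]. rewrite IHT. ring. Qed.

Lemma seq_conv (v D gam : nat -> R) (c G l : R) :
  0 <= G -> (forall t, c <= v t) -> (forall t, 0 <= D t) -> (forall t, 0 <= gam t) ->
  (forall t, D (S t) <= D t - 2 * gam t * (v t - c) + gam t ^ 2 * G) ->
  (forall t, Rabs (v (S t) - v t) <= gam t * G) ->
  cv_infty (fun T => sum_f_R0 gam T) -> Un_cv (fun T => sum_f_R0 (fun t => gam t ^ 2) T) l ->
  Un_cv v c.
Proof.
  intros HG Hv HD Hg HDs Hvs Hinf Hsq.
  set (w := fun t => gam t * (v t - c)).
  assert (Hw0 : forall t, 0 <= w t) by (intros t; unfold w; specialize (Hv t); specialize (Hg t); nra).
  assert (Hsql : forall T, ssum (fun t => gam t ^ 2) T <= l).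
  { intros T. apply Rle_trans with (sum_f_R0 (fun t => gam t ^ 2) T).
    - rewrite sum_f_ssum. apply ssum_mono; [intros; apply pow2_ge_0|lia].
    - apply growing_ineq; auto. intros k. simpl. pose proof (pow2_ge_0 (gam (S k))). lra. }
  set (A := (D 0%nat + G * l) / 2).
  assert (HA : forall T, ssum w T <= A).
  { assert (forall T, 2 * ssum w T <= D 0%nat - D T + G * ssum (fun t => gam t ^ 2) T).
    { induction T; cbn [ssum]; [lra|]. specialize (HDs T). unfold w in *. nra. }
    intros T. specialize (H T). specialize (HD T). specialize (Hsql T). unfold A. nra. }
  destruct (completeness (fun x => exists T, x = ssum w T)) as [L [HL1 HL2]].
  { exists A. intros x [T ->]. auto. }
  { exists (ssum w 0); eauto. }
  assert (Htail : forall del, 0 < del -> exists T1, forall a b, (T1 <= a)%nat -> ssum w b - ssum w a <= del).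
  { intros del Hdel. apply NNPP. intros Hn.
    assert (L <= L - del).
    { apply HL2. intros x [T ->]. apply Rnot_lt_le. intros Hlt. apply Hn. exists T. intros a b Ha.
      pose proof (ssum_mono w T a Hw0 Ha). assert (ssum w b <= L) by (apply HL1; eauto). lra. }
    lra. }
  assert (Hback : forall eta t, 0 < eta -> exists s, (t <= s)%nat /\ v s - c < eta).
  { intros eta t Heta. apply NNPP. intros Hn.
    assert (Hge : forall s, (t <= s)%nat -> eta <= v s - c).
    { intros s Hs. apply Rnot_lt_le. intros H. apply Hn. exists s; auto. }
    destruct (Hinf (ssum gam t + (A + 1) / eta)) as [N0 HN0].
    set (b := max (S N0) t).
    assert (Hb1 : ssum gam t + (A + 1) / eta < ssum gam b).
    { specialize (HN0 N0 (le_n _)). rewrite sum_f_ssum in HN0.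
      pose proof (ssum_mono gam (S N0) b Hg (Nat.le_max_l _ _)). lra. }
    assert (Hb2 : ssum (fun u => eta * gam u) b - ssum (fun u => eta * gam u) t <= ssum w b - ssum w t).
    { replace b with (t + (b - t))%nat by (unfold b; lia). apply ssum_range.
      intros u Hu1 Hu2. unfold w. specialize (Hge u Hu1). specialize (Hg u). nra. }
    rewrite !ssum_scal in Hb2. pose proof (HA b). pose proof (ssum_mono w 0 t Hw0 (Nat.le_0_l _)). simpl in H0.
    assert (eta * ((A + 1) / eta) = A + 1) by (field; lra).
    assert (eta * (ssum gam b - ssum gam t) > A + 1).
    { rewrite <- H1. apply Rmult_lt_compat_l; lra. }
    nra. }
  assert (Htel : forall t k, v t - v (t + k)%nat <= G * (ssum gam (t + k) - ssum gam t)).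
  { intros t k. induction k.
    - rewrite Nat.add_0_r. lra.
    - rewrite Nat.add_succ_r. simpl ssum. specialize (Hvs (t + k)%nat). pose proof (Rle_abs (v (S (t + k)) - v (t + k)%nat)). pose proof (Rle_abs (- (v (S (t + k)) - v (t + k)%nat))). rewrite Rabs_Ropp in *. nra. }
  intros eta Heta.
  set (del := eta ^ 2 / (8 * (G + 1))).
  destruct (Htail del) as [T1 HT1]; [unfold del; apply Rdiv_lt_0_compat; nra|].
  exists T1. intros t Ht. unfold R_dist. rewrite Rabs_right by (specialize (Hv t); lra).
  apply Rnot_le_lt. intros Hbig.
  destruct (least_nat (fun u => (t <= u)%nat /\ v u - c < eta / 2)) as [s [[Hs1 Hs2] Hs3]].
  { apply Hback. lra. }
  assert (Hmid : forall u, (t <= u)%nat -> (u < s)%nat -> eta / 2 <= v u - c).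
  { intros u Hu1 Hu2. apply Rnot_lt_le. intros H. apply (Hs3 u Hu2). auto. }
  pose proof (Htel t (s - t)%nat) as Ht2. replace (t + (s - t))%nat with s in Ht2 by lia.
  assert (Hsg : eta / 2 < G * (ssum gam s - ssum gam t)) by lra.
  assert (Hpos : 0 <= ssum gam s - ssum gam t) by (pose proof (ssum_mono gam t s Hg Hs1); lra).
  assert (Hsg2 : eta / 2 < (G + 1) * (ssum gam s - ssum gam t)) by nra.
  assert (Hrange : ssum (fun u => eta / 2 * gam u) s - ssum (fun u => eta / 2 * gam u) t <= ssum w s - ssum w t).
  { replace s with (t + (s - t))%nat by lia. apply ssum_range.
    intros u Hu1 Hu2. unfold w. specialize (Hmid u Hu1 ltac:(lia)). specialize (Hg u). nra. }
  rewrite !ssum_scal in Hrange.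
  pose proof (HT1 t s Ht).
  assert (eta / 2 * (ssum gam s - ssum gam t) > 2 * del).
  { unfold del. apply (Rmult_lt_reg_l (G + 1)); [lra|].
    replace ((G + 1) * (2 * (eta ^ 2 / (8 * (G + 1))))) with (eta / 2 * (eta / 2)) by (field; lra).
    replace ((G + 1) * (eta / 2 * (ssum gam s - ssum gam t))) with (eta / 2 * ((G + 1) * (ssum gam s - ssum gam t))) by ring.
    apply Rmult_lt_compat_l; lra. }
  assert (0 < del) by (unfold del; apply Rdiv_lt_0_compat; nra).
  lra.
Qed.

Definition ip {N Sd} (E : Fin.t N -> Fin.t N -> bool) (d D : Fin.t N -> Fin.t N -> vec Sd) : R :=
  fsum N (fun i => fsum N (fun j => if E i j then dot (d i j) (D i j) else 0)).

Definition sqn {Sd} (u : vec Sd) := fsum Sd (fun s => u s ^ 2).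

Lemma dot_sub_l {n} (u v w : vec n) : dot (vsub u v) w = dot u w - dot v w.
Proof. unfold dot, vsub. rewrite <- fsum_minus. apply fsum_ext. intros; ring. Qed.

Lemma ip_ext {N Sd} E (d D D' : Fin.t N -> Fin.t N -> vec Sd) :
  (forall i j, E i j = true -> D i j = D' i j) -> ip E d D = ip E d D'.
Proof. intros H. unfold ip. apply fsum_ext; intros i. apply fsum_ext; intros j.
  destruct (E i j) eqn:He; auto. rewrite H; auto. Qed.

Lemma ip_scal {N Sd} E (d D : Fin.t N -> Fin.t N -> vec Sd) c :
  ip E d (fun i j => vscale c (D i j)) = c * ip E d D.
Proof. unfold ip. rewrite <- fsum_scal. apply fsum_ext; intros i. rewrite <- fsum_scal. apply fsum_ext; intros j.
  destruct (E i j); [|ring]. unfold dot, vscale. rewrite <- fsum_scal. apply fsum_ext; intros; ring. Qed.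

Lemma nbsum_total {N Sd} (E : Fin.t N -> Fin.t N -> bool) (lam : Fin.t N -> Fin.t N -> vec Sd) s :
  (forall i j, E i j = E j i) -> fsum N (fun i => nbsum E lam i s) = 0.
Proof.
  intros Hsym. unfold nbsum.
  rewrite (fsum_ext _ _ (fun i => fsum N (fun j => if E i j then lam i j s else 0) - fsum N (fun j => if E i j then lam j i s else 0))).
  - rewrite fsum_minus. rewrite (fsum_swap N N (fun i j => if E i j then lam j i s else 0)).
    rewrite (fsum_ext N (fun j => fsum N (fun i => if E i j then lam j i s else 0)) (fun j => fsum N (fun i => if E j i then lam j i s else 0))).
    + ring.
    + intros j. apply fsum_ext. intros i. rewrite Hsym. reflexivity.
  - intros i. rewrite <- fsum_minus. apply fsum_ext. intros j. destruct (E i j); ring.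
Qed.

Lemma key_identity {N Sd} (E : Fin.t N -> Fin.t N -> bool) (mu : Fin.t N -> vec Sd) (l1 l2 : Fin.t N -> Fin.t N -> vec Sd) :
  (forall i j, E i j = E j i) ->
  fsum N (fun i => dot (mu i) (vsub (fun s => nbsum E l1 i s) (fun s => nbsum E l2 i s))) =
  ip E (fun i j => vsub (mu i) (mu j)) (fun i j => vsub (l1 i j) (l2 i j)).
Proof.
  intros Hsym. set (D := fun i j => vsub (l1 i j) (l2 i j)).
  rewrite (fsum_ext _ _ (fun i => fsum N (fun j => if E i j then dot (mu i) (D i j) else 0) - fsum N (fun j => if E i j then dot (mu i) (D j i) else 0))).
  - rewrite fsum_minus. rewrite (fsum_swap N N (fun i j => if E i j then dot (mu i) (D j i) else 0)).
    unfold ip. rewrite <- fsum_minus. apply fsum_ext. intros i. rewrite <- fsum_minus. apply fsum_ext. intros j.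
    rewrite Hsym. destruct (E j i); [|ring]. rewrite dot_sub_l. reflexivity.
  - intros i. rewrite <- fsum_minus. unfold dot at 1. unfold vsub at 1, nbsum.
    rewrite (fsum_ext _ _ (fun s => fsum N (fun j => if E i j then mu i s * (D i j s - D j i s) else 0))).
    + rewrite fsum_swap. apply fsum_ext. intros j. destruct (E i j).
      * unfold dot. rewrite <- fsum_minus. apply fsum_ext. intros; ring.
      * rewrite fsum_zero. ring.
    + intros s. rewrite <- fsum_minus, <- fsum_scal. apply fsum_ext. intros j. unfold D, vsub. destruct (E i j); ring.
Qed.

Lemma D_update {N Sd} (E : Fin.t N -> Fin.t N -> bool) (l l' ls d : Fin.t N -> Fin.t N -> vec Sd) gam :
  (forall i j, E i j = true -> forall s, l' i j s = l i j s - gam * d i j s) ->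
  fsum N (fun i => fsum N (fun j => if E i j then sqn (vsub (l' i j) (ls i j)) else 0)) =
  fsum N (fun i => fsum N (fun j => if E i j then sqn (vsub (l i j) (ls i j)) else 0))
  - 2 * gam * ip E d (fun i j => vsub (l i j) (ls i j))
  + gam ^ 2 * fsum N (fun i => fsum N (fun j => if E i j then sqn (d i j) else 0)).
Proof.
  intros H. unfold ip. rewrite <- !fsum_scal. rewrite <- fsum_minus, <- fsum_plus. apply fsum_ext. intros i.
  rewrite <- !fsum_scal. rewrite <- fsum_minus, <- fsum_plus. apply fsum_ext. intros j.
  destruct (E i j) eqn:He; [|ring]. unfold sqn, dot, vsub. rewrite <- !fsum_scal. rewrite <- fsum_minus, <- fsum_plus.
  apply fsum_ext. intros s. rewrite H by auto. ring.
Qed.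

Theorem theorem1 (N Sd : nat) (n : Fin.t N -> nat)
  (X : forall i, vec (n i) -> Prop) (f : forall i, vec (n i) -> R)
  (g : forall i, vec (n i) -> vec Sd)
  (E : Fin.t N -> Fin.t N -> bool)
  (gamma : nat -> R) (mustar : vec Sd) (M : R)
  (lam : nat -> Fin.t N -> Fin.t N -> vec Sd)
  (x : nat -> forall i, vec (n i)) (rho : nat -> Fin.t N -> R)
  (mu : nat -> Fin.t N -> vec Sd) :
  (0 < N)%nat -> (0 < Sd)%nat -> (forall i, (0 < n i)%nat) ->
  (* (A1) *)
  (forall i, convex_fun (f i)) ->
  (forall i, exists z, X i z) ->
  (forall i, is_compact (X i)) ->
  (forall i, convex_set (X i)) ->
  (forall i s, convex_fun (fun z => g i z s)) ->
  (* (A2) Slater *)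
  (exists xbar : forall i, vec (n i),
      (forall i, relint (X i) (xbar i)) /\
      vlt (fun s => fsum N (fun i => g i (xbar i) s)) (vzero Sd)) ->
  (* connected undirected graph *)
  (forall i j, E i j = E j i) -> (forall i, E i i = false) -> connected E ->
  (* step sizes *)
  (forall t, 0 <= gamma t) ->
  cv_infty (fun T => sum_f_R0 gamma T) ->
  (exists l, Un_cv (fun T => sum_f_R0 (fun t => (gamma t) ^ 2) T) l) ->
  (* dual optimal mu* and M > ||mu*||_1 *)
  D_optimal X f g mustar -> norm1 mustar < M ->
  (* step (1): primal-dual optimal pair of the local problem *)
  (forall t i, loc_pd_opt (X i) (f i) (g i) M (nbsum E (lam t) i)
                 (x (S t) i) (rho (S t) i) (mu (S t) i)) ->
  (* step (2): multiplier update on the edges *)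
  (forall t i j, E i j = true ->
     forall s, lam (S t) i j s = lam t i j s - gamma t * (mu (S t) i s - mu (S t) j s)) ->
  (forall fstar, P_optval X f g fstar ->
     Un_cv (fun t => fsum N (fun i => f i (x (S t) i) + M * rho (S t) i)) fstar) /\
  (forall xb, limit_point (fun t => x (S t)) xb -> P_optimal X f g xb).
Proof.
  intros HN HSd Hn Hf Hne HX HXc Hg Hslater Hsym Hirr Hcon Hgam Hinf [l Hsq] HDopt HM Hloc Hupd.
  assert (HM0 : 0 < M) by (pose proof (norm1_nonneg mustar); lra).
  set (v := fun t => fsum N (fun i => f i (x (S t) i) + M * rho (S t) i)).
  set (Rs := fun t => fsum N (fun i => rho (S t) i)).
  set (dm := fun t i j => vsub (mu (S t) i) (mu (S t) j)).
  assert (HLS : forall t i, vle (vzero Sd) (mu (S t) i) /\ fsum Sd (mu (S t) i) <= M /\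
    forall x' r' c', X i x' -> 0 <= r' -> (forall s, g i x' s + c' s <= r') ->
      f i (x (S t) i) + M * rho (S t) i + dot (mu (S t) i) (vsub c' (nbsum E (lam t) i)) <= f i x' + M * r').
  { intros t i. apply local_subgrad; auto. }
  assert (Hfeas : forall t i, 0 <= rho (S t) i /\ X i (x (S t) i) /\
             forall s, g i (x (S t) i) s + nbsum E (lam t) i s <= rho (S t) i).
  { intros t i. destruct (Hloc t i) as [[[H1 [H2 H3]] _] _]. split; auto. }
  assert (Hmub : forall t i s, 0 <= mu (S t) i s <= M).
  { intros t i s. destruct (HLS t i) as [H1 [H2 _]]. split. apply H1.
    pose proof (fsum_ge_term Sd (mu (S t) i) s H1). lra. }
  assert (HSUM : forall t lam' z r, (forall i, X i (z i)) -> (forall i, 0 <= r i) ->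
     (forall i s, g i (z i) s + nbsum E lam' i s <= r i) ->
     v t + ip E (dm t) (fun i j => vsub (lam' i j) (lam t i j)) <= fsum N (fun i => f i (z i) + M * r i)).
  { intros t lam' z r Hz Hr Hzr. unfold v, dm. rewrite <- key_identity by auto. rewrite <- fsum_plus.
    apply fsum_le. intros i. destruct (HLS t i) as [_ [_ H]]. apply H; auto. }
  set (G := INR N * (INR N * (INR Sd * (M ^ 2)))).
  assert (HG0 : 0 <= G) by (unfold G; pose proof (pos_INR N); pose proof (pos_INR Sd); pose proof (pow2_ge_0 M);
                             apply Rmult_le_pos; auto; apply Rmult_le_pos; auto; apply Rmult_le_pos; auto).
  assert (Hipb : forall t D, (forall i j s, Rabs (D i j s) <= M) -> Rabs (ip E (dm t) D) <= G).
  { intros t D HD. unfold ip, G. apply fsum_bound. intros i. apply fsum_bound. intros j.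
    destruct (E i j).
    - unfold dot. apply fsum_bound. intros s. rewrite Rabs_mult. unfold dm, vsub.
      replace (M ^ 2) with (M * M) by ring. apply Rmult_le_compat; try apply Rabs_pos; auto.
      pose proof (Hmub t i s). pose proof (Hmub t j s). apply Rabs_le. lra.
    - rewrite Rabs_R0. pose proof (pos_INR Sd). pose proof (pow2_ge_0 M). apply Rmult_le_pos; auto. }
  assert (Hdmb : forall t i j s, Rabs (dm t i j s) <= M).
  { intros t i j s. unfold dm, vsub. pose proof (Hmub t i s). pose proof (Hmub t j s). apply Rabs_le. lra. }
  assert (HEP : forall fstar, P_optval X f g fstar -> forall lam' z r, (forall i, X i (z i)) -> (forall i, 0 <= r i) ->
     (forall i s, g i (z i) s + nbsum E lam' i s <= r i) ->
     fstar + (M - norm1 mustar) * fsum N r <= fsum N (fun i => f i (z i) + M * r i)).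
  { intros fstar Hopt lam' z r Hz Hr Hzr.
    pose proof (exact_penalty N Sd n X f g mustar fstar HN Hf HX HXc Hg Hslater HDopt Hopt z (fsum N r) Hz) as H.
    rewrite fsum_plus, fsum_scal. unfold P_cost in H.
    assert (fstar <= fsum N (fun i => f i (z i)) + norm1 mustar * fsum N r).
    { apply H. apply fsum_nonneg; auto. intros s.
      assert (fsum N (fun i => g i (z i) s + nbsum E lam' i s) <= fsum N r) by (apply fsum_le; auto).
      rewrite fsum_plus, nbsum_total in H0 by auto. lra. }
    lra. }
  assert (Hmain : forall fstar, P_optval X f g fstar -> Un_cv v fstar /\
            forall t, (M - norm1 mustar) * Rs t <= v t - fstar).
  { intros fstar Hopt.
    assert (HVLB : forall t, (M - norm1 mustar) * Rs t <= v t - fstar).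
    { intros t. pose proof (HEP fstar Hopt (lam t) (x (S t)) (rho (S t)) (fun i => proj1 (proj2 (Hfeas t i)))
                      (fun i => proj1 (Hfeas t i)) (fun i => proj2 (proj2 (Hfeas t i)))). unfold v, Rs; cbv beta. change (fsum N (rho (S t))) with (fsum N (fun i => rho (S t) i)) in H. lra. }
    split; auto.
    destruct (P_opt_exists N Sd n X f g fstar HX Hf Hg Hopt) as [xs [[Hxs1 Hxs2] Hxs3]].
    destruct (nb_realize E Hsym Hirr Hcon HN
               (fun i s => - g i (xs i) s + fsum N (fun k => g k (xs k) s) / INR N)) as [lst Hlst].
    { intros s. rewrite fsum_plus, fsum_opp, fsum_const. field. apply not_0_INR. lia. }
    assert (HNr : 0 < INR N) by (apply lt_0_INR; lia).
    assert (Hstar : forall t, v t + ip E (dm t) (fun i j => vsub (lst i j) (lam t i j)) <= fstar).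
    { intros t. eapply Rle_trans.
      - apply (HSUM t lst xs (fun _ => 0)); auto. intros; lra.
        intros i s. rewrite Hlst. specialize (Hxs2 s).
        assert (fsum N (fun k => g k (xs k) s) / INR N <= 0).
        { unfold Rdiv. pose proof (Rinv_0_lt_compat _ HNr). nra. }
        lra.
      - unfold P_cost in Hxs3. rewrite (fsum_ext _ _ (fun i => f i (xs i))) by (intros; ring). auto. }
    set (D := fun t => fsum N (fun i => fsum N (fun j => if E i j then sqn (vsub (lam t i j) (lst i j)) else 0))).
    assert (HD0 : forall t, 0 <= D t).
    { intros t. unfold D. apply fsum_nonneg. intros i. apply fsum_nonneg. intros j. destruct (E i j); [|lra].
      apply fsum_nonneg. intros; apply pow2_ge_0. }
    assert (Hneg : forall t (a b : Fin.t N -> Fin.t N -> vec Sd),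
              ip E (dm t) (fun i j => vsub (a i j) (b i j)) = - ip E (dm t) (fun i j => vsub (b i j) (a i j))).
    { intros t a b. rewrite <- (Rmult_1_l (ip E (dm t) (fun i j => vsub (b i j) (a i j)))).
      rewrite Ropp_mult_distr_l, <- ip_scal. apply ip_ext. intros i j _. apply vec_ext. intros s.
      unfold vscale, vsub. ring. }
    assert (HQ : forall t, fsum N (fun i => fsum N (fun j => if E i j then sqn (dm t i j) else 0)) <= G).
    { intros t. eapply Rle_trans; [apply Rle_abs|]. 
      replace (fsum N (fun i => fsum N (fun j => if E i j then sqn (dm t i j) else 0))) with (ip E (dm t) (dm t)).
      - apply Hipb. apply Hdmb.
      - unfold ip. apply fsum_ext; intros i; apply fsum_ext; intros j. destruct (E i j); auto.
        unfold sqn, dot. apply fsum_ext; intros; ring. }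
    assert (HDs : forall t, D (S t) <= D t - 2 * gamma t * (v t - fstar) + gamma t ^ 2 * G).
    { intros t. unfold D. rewrite (D_update E (lam t) (lam (S t)) lst (dm t) (gamma t)).
      - fold (D t). rewrite Hneg. pose proof (Hstar t). pose proof (HQ t). pose proof (Hgam t).
        assert (gamma t ^ 2 * fsum N (fun i => fsum N (fun j => if E i j then sqn (dm t i j) else 0)) <= gamma t ^ 2 * G)
          by (apply Rmult_le_compat_l; auto; apply pow2_ge_0).
        nra.
      - intros i j He s. rewrite Hupd by auto. reflexivity. }
    assert (Hvs : forall t, Rabs (v (S t) - v t) <= gamma t * G).
    { intros t.
      assert (Hup : forall i j, E i j = true -> vsub (lam t i j) (lam (S t) i j) = vscale (gamma t) (dm t i j)).
      { intros i j He. apply vec_ext. intros s. unfold vsub, vscale, dm. rewrite Hupd by auto. unfold vsub. ring. }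
      assert (Hdn : forall i j, E i j = true -> vsub (lam (S t) i j) (lam t i j) = vscale (- gamma t) (dm t i j)).
      { intros i j He. apply vec_ext. intros s. unfold vsub, vscale, dm. rewrite Hupd by auto. unfold vsub. ring. }
      pose proof (HSUM (S t) (lam t) (x (S t)) (rho (S t)) (fun i => proj1 (proj2 (Hfeas t i)))
                    (fun i => proj1 (Hfeas t i)) (fun i => proj2 (proj2 (Hfeas t i)))) as H1.
      rewrite (ip_ext E _ _ (fun i j => vscale (gamma t) (dm t i j))) in H1 by auto. rewrite ip_scal in H1.
      pose proof (HSUM t (lam (S t)) (x (S (S t))) (rho (S (S t))) (fun i => proj1 (proj2 (Hfeas (S t) i)))
                    (fun i => proj1 (Hfeas (S t) i)) (fun i => proj2 (proj2 (Hfeas (S t) i)))) as H2.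
      rewrite (ip_ext E _ _ (fun i j => vscale (- gamma t) (dm t i j))) in H2 by auto. rewrite ip_scal in H2.
      pose proof (Hipb (S t) (dm t) (Hdmb t)). pose proof (Hipb t (dm t) (Hdmb t)).
      change (fsum N (fun i => f i (x (S t) i) + M * rho (S t) i)) with (v t) in H1.
      change (fsum N (fun i => f i (x (S (S t)) i) + M * rho (S (S t)) i)) with (v (S t)) in H2.
      pose proof (Hgam t).
      set (a1 := ip E (dm (S t)) (dm t)) in *. set (a2 := ip E (dm t) (dm t)) in *.
      pose proof (Rle_abs a1). pose proof (Rle_abs (- a1)). pose proof (Rle_abs a2). pose proof (Rle_abs (- a2)).
      rewrite Rabs_Ropp in *.
      assert (gamma t * (- a1) <= gamma t * G) by (apply Rmult_le_compat_l; lra).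
      assert (gamma t * a2 <= gamma t * G) by (apply Rmult_le_compat_l; lra).
      apply Rabs_le. split; nra. }
    assert (Hvge : forall t, fstar <= v t).
    { intros t. pose proof (HVLB t). assert (0 <= Rs t) by (apply fsum_nonneg; intros; apply Hfeas).
      assert (0 <= (M - norm1 mustar) * Rs t) by (apply Rmult_le_pos; lra). lra. }
    apply (seq_conv v D gamma fstar G l); auto. }
  split.
  - intros fstar Hopt. exact (proj1 (Hmain fstar Hopt)).
  - intros xb Hlp.
    destruct (fin_bound (fun i B => forall y, X i y -> Rabs (f i y) <= B)) as [Bf [HBf0 HBf]].
    { intros i B B' H1 H2 y Hy; specialize (H1 y Hy); lra. }
    { intros i; apply conv_bounded; auto. }
    destruct Hslater as [xbar [Hxb1 Hxb2]].
    destruct (inf_exists (fun c => exists y, P_feasible X g y /\ c = P_cost f y)) as [fstar Hopt].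
    { exists (P_cost f xbar), xbar. split; auto. split. intros i; apply Hxb1.
      intros s. specialize (Hxb2 s). unfold vzero in Hxb2. lra. }
    { exists (- (INR N * Bf)). intros c [y [[Hy1 _] ->]]. unfold P_cost.
      assert (Rabs (fsum N (fun i => f i (y i))) <= INR N * Bf) by (apply fsum_bound; intros; apply HBf; auto).
      pose proof (Rle_abs (- fsum N (fun i => f i (y i)))). rewrite Rabs_Ropp in H0. lra. }
    destruct (Hmain fstar Hopt) as [Hcv HRs].
    destruct (extract (fun m t => dist_prod (x (S t)) xb < / (INR m + 1))) as [phi [Hphi1 Hphi2]].
    { intros m T. destruct (Hlp (/ (INR m + 1)) T) as [t [Ht1 Ht2]].
      apply Rinv_0_lt_compat; pose proof (pos_INR m); lra. exists t; auto. }
    assert (Hdi : forall k i, Defs.dist (x (S (phi k)) i) (xb i) < / (INR k + 1)).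
    { intros k i. eapply Rle_lt_trans; [|apply Hphi2].
      apply (fsum_ge_term N (fun i => Defs.dist (x (S (phi k)) i) (xb i))). intros; apply sqrt_pos. }
    assert (Hconv : forall i, conv (fun k => x (S (phi k)) i) (xb i)).
    { intros i e He. pose proof (pos_INR (n i)).
      destruct (inv_small (e / (INR (n i) + 1))) as [K HK]. apply Rdiv_lt_0_compat; lra.
      exists K. intros k Hk. eapply Rle_lt_trans; [apply norm1_le_norm2|].
      fold (Defs.dist (x (S (phi k)) i) (xb i)).
      apply Rle_lt_trans with (INR (n i) * / (INR k + 1)).
      { apply Rmult_le_compat_l; auto. left; apply Hdi. }
      apply Rle_lt_trans with (INR (n i) * (e / (INR (n i) + 1))).
      { apply Rmult_le_compat_l; auto. left; apply HK; auto. }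
      apply (Rmult_lt_reg_r (INR (n i) + 1)); [lra|].
      replace (INR (n i) * (e / (INR (n i) + 1)) * (INR (n i) + 1)) with (INR (n i) * e) by (field; lra). nra. }
    assert (HXb : forall i, X i (xb i)).
    { intros i. apply (compact_closed (X i)); auto. intros e He. destruct (Hconv i e He) as [K HK].
      exists (x (S (phi K)) i). split; [apply Hfeas|]. apply HK; lia. }
    assert (HRs0 : forall e, 0 < e -> exists K, forall t, (K <= t)%nat -> Rs t < e).
    { intros e He. destruct (Hcv ((M - norm1 mustar) * e)) as [K HK]. apply Rmult_lt_0_compat; lra.
      exists K. intros t Ht. specialize (HK t Ht). unfold R_dist in HK. pose proof (HRs t).
      pose proof (Rle_abs (v t - fstar)). apply (Rmult_lt_reg_l (M - norm1 mustar)); lra. }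
    assert (Hvlt : forall e, 0 < e -> exists K, forall t, (K <= t)%nat -> v t < fstar + e).
    { intros e He. destruct (Hcv e He) as [K HK]. exists K. intros t Ht. specialize (HK t Ht).
      unfold R_dist in HK. pose proof (Rle_abs (v t - fstar)). lra. }
    assert (Hfeasb : P_feasible X g xb).
    { split; auto. intros s. apply Rnot_lt_le. intros Hs.
      set (eta := fsum N (fun i => g i (xb i) s) / 3).
      destruct (lsc_sum N n (fun i z => g i z s) (fun k => x (S (phi k))) xb (fun i => Hg i s) Hconv eta) as [K1 HK1].
      { unfold eta; lra. }
      destruct (HRs0 eta) as [K2 HK2]. unfold eta; lra.
      set (k := max K1 K2).
      specialize (HK1 k (Nat.le_max_l _ _)). specialize (HK2 (phi k) ltac:(pose proof (incr_ge phi Hphi1 k); unfold k in *; lia)).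
      assert (fsum N (fun i => g i (x (S (phi k)) i) s) <= Rs (phi k)).
      { assert (fsum N (fun i => g i (x (S (phi k)) i) s + nbsum E (lam (phi k)) i s) <= Rs (phi k)).
        { apply fsum_le. intros i. apply Hfeas. }
        rewrite fsum_plus, nbsum_total in H by auto. lra. }
      simpl in HK1. unfold eta in *. lra. }
    split; auto.
    assert (Hcost : P_cost f xb <= fstar).
    { apply Rnot_lt_le. intros Hs.
      set (eta := (P_cost f xb - fstar) / 3).
      destruct (lsc_sum N n f (fun k => x (S (phi k))) xb Hf Hconv eta) as [K1 HK1].
      { unfold eta; lra. }
      destruct (Hvlt eta) as [K2 HK2]. unfold eta; lra.
      set (k := max K1 K2).
      specialize (HK1 k (Nat.le_max_l _ _)). specialize (HK2 (phi k) ltac:(pose proof (incr_ge phi Hphi1 k); unfold k in *; lia)).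
      assert (fsum N (fun i => f i (x (S (phi k)) i)) <= v (phi k)).
      { unfold v. apply fsum_le. intros i. pose proof (proj1 (Hfeas (phi k) i)). nra. }
      unfold P_cost in *. unfold eta in *. lra. }
    intros y Hy. destruct Hopt as [H1 _]. pose proof (H1 (P_cost f y) (ex_intro _ y (conj Hy eq_refl))). lra.
Qed.
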